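(* Let $H_1,\dots,H_n$ be symmetric operators on a Hilbert space $\mathcal H$ with common dense domain $\mathcal D$, let $I\subset\mathbb R$ be an interval, and let $f_i,g_i\in C^1(I)$ real-valued, $i=1,\dots,n$. Suppose that $H^{(1)}(t)=\sum_i f_i(t)H_i$ and $H^{(2)}(t)=\sum_i g_i(t)H_i$, both with domain $\mathcal D$, satisfy hypotheses (i)–(iii) below, and let $U_1(t,s)$, $U_2(t,s)$ be the associated unitary propagators (whose existence is guaranteed under these hypotheses, with $U_k(t,s)\Psi$ strongly differentiable in $t$ and solving $\frac{d}{dt}\Psi(t)=-iH^{(k)}(t)\Psi(t)$ for $\Psi(s)\in\mathcal D$). Then for every $\Psi\in\mathcal D$, every $s<T$ in $I$ and every $\varepsilon>0$ there exists $\delta>0$ such that $\max_i\|f_i-g_i\|_\infty<\delta$ implies \[\|U_1(T,s)\Psi-U_2(T,s)\Psi\|<\varepsilon.\]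
   Context: Hypotheses for $H(t)=\sum_i f_i(t)H_i$ on domain $\mathcal D$: (i) $H(t)$ is self-adjoint for all $t\in I$; (ii) $f_i\in C^1(I)$; (iii) for every $i$ there is $K>0$ independent of $t$ with $\|H_i\Psi\|\le K(\|H(t)\Psi\|+\|\Psi\|)$ for all $\Psi\in\mathcal D$, $t\in I$. A unitary propagator is a family of unitaries $U(t,s)$ with $U(r,s)U(s,t)=U(r,t)$, $U(t,t)=\mathrm{Id}$, jointly strongly continuous. $\|\cdot\|_\infty$ is the sup norm on $I$. *)

(* Defs.v *)
From Stdlib Require Import Reals Lra.
Open Scope R_scope.

Record C := mkC { Re : R; Im : R }.
Definition Cadd (z w : C) : C := mkC (Re z + Re w) (Im z + Im w).
Definition Cmul (z w : C) : C :=
  mkC (Re z * Re w - Im z * Im w) (Re z * Im w + Im z * Re w).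
Definition Cconj (z : C) : C := mkC (Re z) (- Im z).
Definition Cof (x : R) : C := mkC x 0.
Definition Ci : C := mkC 0 1.

(** * Complex Hilbert spaces
    inner product: conjugate-linear in the first, linear in the second argument. *)
Record HilbertSpace := {
  hcarrier :> Type;
  vzero : hcarrier;
  vadd : hcarrier -> hcarrier -> hcarrier;
  vopp : hcarrier -> hcarrier;
  vscal : C -> hcarrier -> hcarrier;
  inner : hcarrier -> hcarrier -> C;
  vadd_assoc : forall x y z, vadd x (vadd y z) = vadd (vadd x y) z;
  vadd_comm : forall x y, vadd x y = vadd y x;
  vadd_0 : forall x, vadd x vzero = x;
  vadd_opp : forall x, vadd x (vopp x) = vzero;
  vscal_1 : forall x, vscal (Cof 1) x = x;
  vscal_assoc : forall a b x, vscal a (vscal b x) = vscal (Cmul a b) x;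
  vscal_distr_v : forall a x y, vscal a (vadd x y) = vadd (vscal a x) (vscal a y);
  vscal_distr_c : forall a b x, vscal (Cadd a b) x = vadd (vscal a x) (vscal b x);
  inner_conj : forall x y, inner x y = Cconj (inner y x);
  inner_add_r : forall x y z, inner x (vadd y z) = Cadd (inner x y) (inner x z);
  inner_scal_r : forall a x y, inner x (vscal a y) = Cmul a (inner x y);
  inner_pos : forall x, 0 <= Re (inner x x);
  inner_def : forall x, Re (inner x x) = 0 -> x = vzero;
  complete : forall u : nat -> hcarrier,
    (forall eps, 0 < eps -> exists N, forall m k, (N <= m)%nat -> (N <= k)%nat ->
        sqrt (Re (inner (vadd (u m) (vopp (u k))) (vadd (u m) (vopp (u k))))) < eps) ->
    exists l, forall eps, 0 < eps -> exists N, forall m, (N <= m)%nat ->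
        sqrt (Re (inner (vadd (u m) (vopp l)) (vadd (u m) (vopp l)))) < eps
}.

Arguments vzero {_}. Arguments vadd {_}. Arguments vopp {_}.
Arguments vscal {_}. Arguments inner {_}.

Section Ops.
Variable Hs : HilbertSpace.

Definition vsub (x y : Hs) : Hs := vadd x (vopp y).
Definition vnorm (x : Hs) : R := sqrt (Re (inner x x)).

Fixpoint vsum (n : nat) (F : nat -> Hs) : Hs :=
  match n with O => vzero | S m => vadd (vsum m F) (F m) end.

Definition subspace (D : Hs -> Prop) : Prop :=
  D vzero /\ (forall x y, D x -> D y -> D (vadd x y)) /\
  (forall a x, D x -> D (vscal a x)).

Definition dense (D : Hs -> Prop) : Prop :=
  forall x eps, 0 < eps -> exists y, D y /\ vnorm (vsub x y) < eps.

Definition linear_on (D : Hs -> Prop) (A : Hs -> Hs) : Prop :=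
  forall a x y, D x -> D y -> A (vadd (vscal a x) y) = vadd (vscal a (A x)) (A y).

Definition symmetric_op (D : Hs -> Prop) (A : Hs -> Hs) : Prop :=
  subspace D /\ dense D /\ linear_on D A /\
  forall x y, D x -> D y -> inner (A x) y = inner x (A y).

(** self-adjoint: symmetric and A* = A, i.e. dom(A* ) is contained in D and
    A* phi = A phi (dom(A* ) = {phi | exists eta, forall psi in D,
    <phi, A psi> = <eta, psi>}, A* phi = eta). *)
Definition self_adjoint (D : Hs -> Prop) (A : Hs -> Hs) : Prop :=
  symmetric_op D A /\
  forall phi eta, (forall psi, D psi -> inner phi (A psi) = inner eta psi) ->
    D phi /\ eta = A phi.

Definition Hsum (n : nat) (f : nat -> R -> R) (Hop : nat -> Hs -> Hs)
  (t : R) (x : Hs) : Hs :=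
  vsum n (fun i => vscal (Cof (f i t)) (Hop i x)).

Definition hyp_i (I : R -> Prop) (D : Hs -> Prop) (n : nat)
  (f : nat -> R -> R) (Hop : nat -> Hs -> Hs) : Prop :=
  forall t, I t -> self_adjoint D (Hsum n f Hop t).

Definition hyp_iii (I : R -> Prop) (D : Hs -> Prop) (n : nat)
  (f : nat -> R -> R) (Hop : nat -> Hs -> Hs) : Prop :=
  forall i, (i < n)%nat -> exists K, 0 < K /\
    forall x t, D x -> I t ->
      vnorm (Hop i x) <= K * (vnorm (Hsum n f Hop t x) + vnorm x).

Definition unitary_propagator (I : R -> Prop) (U : R -> R -> Hs -> Hs) : Prop :=
  (forall t s, I t -> I s ->
     (forall a x y, U t s (vadd (vscal a x) y) = vadd (vscal a (U t s x)) (U t s y)) /\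
     (forall x y, inner (U t s x) (U t s y) = inner x y) /\
     (forall y, exists x, U t s x = y)) /\
  (forall r s t x, I r -> I s -> I t -> U r s (U s t x) = U r t x) /\
  (forall t x, I t -> U t t x = x) /\
  (forall x t s, I t -> I s -> forall eps, 0 < eps -> exists d, 0 < d /\
     forall t' s', I t' -> I s' -> Rabs (t' - t) < d -> Rabs (s' - s) < d ->
       vnorm (vsub (U t' s' x) (U t s x)) < eps).

Definition has_vderiv_in (I : R -> Prop) (F : R -> Hs) (t : R) (v : Hs) : Prop :=
  forall eps, 0 < eps -> exists d, 0 < d /\
    forall h, h <> 0 -> I (t + h) -> Rabs h < d ->
      vnorm (vsub (vscal (Cof (/ h)) (vsub (F (t + h)) (F t))) v) < eps.

Definition solves (I : R -> Prop) (D : Hs -> Prop) (H : R -> Hs -> Hs)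
  (U : R -> R -> Hs -> Hs) : Prop :=
  forall s x, I s -> D x ->
    (forall t, I t -> D (U t s x)) /\
    (forall t, I t -> has_vderiv_in I (fun r => U r s x) t
                        (vscal (mkC 0 (-1)) (H t (U t s x)))).

Definition propagator_of (I : R -> Prop) (D : Hs -> Prop) (n : nat)
  (f : nat -> R -> R) (Hop : nat -> Hs -> Hs) (U : R -> R -> Hs -> Hs) : Prop :=
  unitary_propagator I U /\ solves I D (Hsum n f Hop) U.

End Ops.

Arguments vsub {_}. Arguments vnorm {_}.

Definition is_interval (I : R -> Prop) : Prop :=
  forall a b c, I a -> I c -> a <= b -> b <= c -> I b.

Definition C1_on (I : R -> Prop) (f : R -> R) : Prop :=
  exists f' : R -> R,
    (forall t, I t -> forall eps, 0 < eps -> exists d, 0 < d /\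
       forall h, h <> 0 -> I (t + h) -> Rabs h < d ->
         Rabs ((f (t + h) - f t) / h - f' t) < eps) /\
    (forall t, I t -> forall eps, 0 < eps -> exists d, 0 < d /\
       forall u, I u -> Rabs (u - t) < d -> Rabs (f' u - f' t) < eps).

Definition sup_close (I : R -> Prop) (n : nat) (f g : nat -> R -> R) (delta : R) : Prop :=
  exists c, c < delta /\
    forall i t, (i < n)%nat -> I t -> Rabs (f i t - g i t) <= c.

(* Main.v *)
Require Import Defs.
From Stdlib Require Import Reals Lra Psatz ZArith Classical ClassicalEpsilon.
Open Scope R_scope.


Lemma Ceq (z w : Defs.C) : Re z = Re w -> Im z = Im w -> z = w.
Proof. destruct z, w; simpl; intros; subst; reflexivity. Qed.

Section HL.
Context {Hs : HilbertSpace}.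

Lemma vadd_0_l (x : Hs) : vadd vzero x = x.
Proof. rewrite vadd_comm; apply vadd_0. Qed.

Lemma vopp_unique (x y : Hs) : vadd x y = vzero -> y = vopp x.
Proof.
  intro H. rewrite <- (vadd_0 _ y). rewrite <- (vadd_opp _ x).
  rewrite vadd_assoc. rewrite (vadd_comm _ y x), H. apply vadd_0_l.
Qed.

Lemma vadd_cancel_r (x y z : Hs) : vadd x z = vadd y z -> x = y.
Proof.
  intro H. rewrite <- (vadd_0 _ x), <- (vadd_0 _ y), <- (vadd_opp _ z).
  rewrite !vadd_assoc, H. reflexivity.
Qed.

Lemma vscal_0 (x : Hs) : vscal (Cof 0) x = vzero.
Proof.
  apply (vadd_cancel_r _ _ (vscal (Cof 0) x)).
  rewrite vadd_0_l, <- vscal_distr_c. f_equal. apply Ceq; simpl; ring.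
Qed.

Lemma vopp_scal (x : Hs) : vopp x = vscal (Cof (-1)) x.
Proof.
  symmetry. apply vopp_unique. rewrite <- (vscal_1 _ x) at 1.
  rewrite <- vscal_distr_c. rewrite <- (vscal_0 x). f_equal. apply Ceq; simpl; ring.
Qed.

Lemma vscal_zero (a : Defs.C) : vscal a (@vzero Hs) = vzero.
Proof.
  rewrite <- (vscal_0 vzero) at 2. rewrite <- (vscal_0 vzero) at 1.
  rewrite vscal_assoc. f_equal. apply Ceq; simpl; ring.
Qed.

Lemma vopp_zero : vopp (@vzero Hs) = vzero.
Proof. rewrite vopp_scal. apply vscal_zero. Qed.

Lemma vopp_add (x y : Hs) : vopp (vadd x y) = vadd (vopp x) (vopp y).
Proof. rewrite !vopp_scal, vscal_distr_v. reflexivity. Qed.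

Lemma vopp_opp (x : Hs) : vopp (vopp x) = x.
Proof. rewrite !vopp_scal, vscal_assoc. rewrite <- (vscal_1 _ x) at 2. f_equal. apply Ceq; simpl; ring. Qed.

Lemma vscal_opp (a : Defs.C) (x : Hs) : vscal a (vopp x) = vopp (vscal a x).
Proof. rewrite !vopp_scal, !vscal_assoc. f_equal. apply Ceq; simpl; ring. Qed.

Lemma vsub_diag (x : Hs) : vsub x x = vzero.
Proof. apply vadd_opp. Qed.

Lemma vadd_opp_l (x : Hs) : vadd (vopp x) x = vzero.
Proof. rewrite vadd_comm; apply vadd_opp. Qed.

Lemma inner_add_l (x y z : Hs) : inner (vadd x y) z = Cadd (inner x z) (inner y z).
Proof.
  rewrite inner_conj, inner_add_r, (inner_conj _ z x), (inner_conj _ z y).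
  apply Ceq; simpl; ring.
Qed.

Lemma inner_scal_l (a : Defs.C) (x y : Hs) : inner (vscal a x) y = Cmul (Cconj a) (inner x y).
Proof.
  rewrite inner_conj, inner_scal_r, (inner_conj _ y x). destruct a; apply Ceq; simpl; ring.
Qed.

Lemma inner_zero_r (x : Hs) : inner x vzero = Cof 0.
Proof. rewrite <- (vscal_0 x), inner_scal_r. apply Ceq; simpl; ring. Qed.

Lemma inner_zero_l (x : Hs) : inner vzero x = Cof 0.
Proof. rewrite inner_conj, inner_zero_r. apply Ceq; simpl; ring. Qed.

Lemma inner_opp_r (x y : Hs) : inner x (vopp y) = Cmul (Cof (-1)) (inner x y).
Proof. rewrite vopp_scal, inner_scal_r. reflexivity. Qed.

Lemma inner_opp_l (x y : Hs) : inner (vopp x) y = Cmul (Cof (-1)) (inner x y).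
Proof. rewrite vopp_scal, inner_scal_l. apply Ceq; simpl; ring. Qed.

Lemma Re_inner_sym (x y : Hs) : Re (inner x y) = Re (inner y x).
Proof. rewrite inner_conj. reflexivity. Qed.

Lemma Im_inner_sym (x y : Hs) : Im (inner x y) = - Im (inner y x).
Proof. rewrite inner_conj. reflexivity. Qed.

Lemma Im_inner_self (x : Hs) : Im (inner x x) = 0.
Proof. pose proof (Im_inner_sym x x). lra. Qed.

Definition nsq (x : Hs) := Re (inner x x).

Lemma nsq_ge0 (x : Hs) : 0 <= nsq x.
Proof. apply inner_pos. Qed.

Lemma vnorm_sq (x : Hs) : vnorm x * vnorm x = nsq x.
Proof. unfold vnorm. apply sqrt_sqrt, inner_pos. Qed.

Lemma vnorm_ge0 (x : Hs) : 0 <= vnorm x.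
Proof. apply sqrt_pos. Qed.

Lemma Re_inner_add_r (x y z : Hs) : Re (inner x (vadd y z)) = Re (inner x y) + Re (inner x z).
Proof. rewrite inner_add_r. reflexivity. Qed.
Lemma Re_inner_add_l (x y z : Hs) : Re (inner (vadd x y) z) = Re (inner x z) + Re (inner y z).
Proof. rewrite inner_add_l. reflexivity. Qed.
Lemma Im_inner_add_r (x y z : Hs) : Im (inner x (vadd y z)) = Im (inner x y) + Im (inner x z).
Proof. rewrite inner_add_r. reflexivity. Qed.
Lemma Im_inner_add_l (x y z : Hs) : Im (inner (vadd x y) z) = Im (inner x z) + Im (inner y z).
Proof. rewrite inner_add_l. reflexivity. Qed.
Lemma Re_inner_opp_r (x y : Hs) : Re (inner x (vopp y)) = - Re (inner x y).
Proof. rewrite inner_opp_r. simpl. ring. Qed.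
Lemma Re_inner_opp_l (x y : Hs) : Re (inner (vopp x) y) = - Re (inner x y).
Proof. rewrite inner_opp_l. simpl. ring. Qed.
Lemma Im_inner_opp_r (x y : Hs) : Im (inner x (vopp y)) = - Im (inner x y).
Proof. rewrite inner_opp_r. simpl. ring. Qed.
Lemma Im_inner_opp_l (x y : Hs) : Im (inner (vopp x) y) = - Im (inner x y).
Proof. rewrite inner_opp_l. simpl. ring. Qed.
Lemma Re_inner_scal_r (a : Defs.C) (x y : Hs) :
  Re (inner x (vscal a y)) = Re a * Re (inner x y) - Im a * Im (inner x y).
Proof. rewrite inner_scal_r. reflexivity. Qed.
Lemma Im_inner_scal_r (a : Defs.C) (x y : Hs) :
  Im (inner x (vscal a y)) = Re a * Im (inner x y) + Im a * Re (inner x y).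
Proof. rewrite inner_scal_r. reflexivity. Qed.
Lemma Re_inner_scal_l (a : Defs.C) (x y : Hs) :
  Re (inner (vscal a x) y) = Re a * Re (inner x y) + Im a * Im (inner x y).
Proof. rewrite inner_scal_l. destruct a; simpl. ring. Qed.
Lemma Im_inner_scal_l (a : Defs.C) (x y : Hs) :
  Im (inner (vscal a x) y) = Re a * Im (inner x y) - Im a * Re (inner x y).
Proof. rewrite inner_scal_l. destruct a; simpl. ring. Qed.

Lemma nsq_add (x y : Hs) : nsq (vadd x y) = nsq x + 2 * Re (inner x y) + nsq y.
Proof.
  unfold nsq. rewrite Re_inner_add_l, !Re_inner_add_r, (Re_inner_sym y x). ring.
Qed.

Lemma nsq_scal (a : Defs.C) (x : Hs) : nsq (vscal a x) = (Re a * Re a + Im a * Im a) * nsq x.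
Proof.
  unfold nsq. rewrite Re_inner_scal_l, Re_inner_scal_r, Im_inner_scal_r, Im_inner_self. ring.
Qed.

Lemma nsq_zero_iff (x : Hs) : nsq x = 0 -> x = vzero.
Proof. apply inner_def. Qed.

Lemma nsq_vzero : nsq (@vzero Hs) = 0.
Proof. unfold nsq. rewrite inner_zero_r. reflexivity. Qed.

Lemma cauchy_schwarz (x y : Hs) : Re (inner x y) <= vnorm x * vnorm y.
Proof.
  set (r := Re (inner x y)).
  assert (Hq : forall t, 0 <= nsq x + 2 * t * r + t * t * nsq y).
  { intro t. pose proof (nsq_ge0 (vadd x (vscal (Cof t) y))) as H.
    rewrite nsq_add, nsq_scal, Re_inner_scal_r in H. simpl in H.
    unfold r. lra. }
  destruct (Req_dec (nsq y) 0) as [Hy|Hy].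
  - apply nsq_zero_iff in Hy. unfold r; subst y. rewrite inner_zero_r. simpl.
    apply Rmult_le_pos; apply vnorm_ge0.
  - pose proof (nsq_ge0 y) as Hy0. pose proof (nsq_ge0 x) as Hx0.
    assert (Hp : 0 < nsq y) by lra.
    specialize (Hq (- r / nsq y)).
    assert (r * r <= nsq x * nsq y).
    { replace (nsq x + 2 * (- r / nsq y) * r + - r / nsq y * (- r / nsq y) * nsq y)
        with (nsq x - r * r / nsq y) in Hq by (field; lra).
      apply Rmult_le_reg_r with (/ nsq y). apply Rinv_0_lt_compat; lra.
      replace (nsq x * nsq y * / nsq y) with (nsq x) by (field; lra).
      unfold Rdiv in Hq. lra. }
    unfold vnorm. rewrite <- sqrt_mult by assumption.
    destruct (Rle_or_lt r 0). { pose proof (sqrt_pos (nsq x * nsq y)). fold (nsq x) (nsq y). lra. }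
    rewrite <- (sqrt_square r) by lra. apply sqrt_le_1_alt. fold (nsq x) (nsq y). lra.
Qed.

Lemma vnorm_scal (a : Defs.C) (x : Hs) : vnorm (vscal a x) = sqrt (Re a * Re a + Im a * Im a) * vnorm x.
Proof.
  unfold vnorm. fold (nsq (vscal a x)) (nsq x). rewrite nsq_scal. apply sqrt_mult.
  nra. apply nsq_ge0.
Qed.

Lemma vnorm_scalR (a : R) (x : Hs) : vnorm (vscal (Cof a) x) = Rabs a * vnorm x.
Proof. rewrite vnorm_scal. simpl. f_equal. rewrite Rmult_0_l, Rplus_0_r. apply sqrt_Rsqr_abs. Qed.

Lemma vnorm_opp (x : Hs) : vnorm (vopp x) = vnorm x.
Proof. rewrite vopp_scal, vnorm_scalR. replace (Rabs (-1)) with 1. ring. rewrite Rabs_left; lra. Qed.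

Lemma cauchy_schwarz_abs (x y : Hs) : Rabs (Re (inner x y)) <= vnorm x * vnorm y.
Proof.
  unfold Rabs. destruct (Rcase_abs _).
  - pose proof (cauchy_schwarz x (vopp y)). rewrite Re_inner_opp_r, vnorm_opp in H. lra.
  - apply cauchy_schwarz.
Qed.

Lemma vnorm_scal_i (b : R) (x : Hs) : vnorm (vscal (mkC 0 b) x) = Rabs b * vnorm x.
Proof. rewrite vnorm_scal. simpl. f_equal. rewrite Rmult_0_l, Rplus_0_l. apply sqrt_Rsqr_abs. Qed.

Lemma vnorm_zero : vnorm (@vzero Hs) = 0.
Proof. unfold vnorm. fold (nsq (@vzero Hs)). rewrite nsq_vzero. apply sqrt_0. Qed.

Lemma vnorm_eq0 (x : Hs) : vnorm x = 0 -> x = vzero.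
Proof.
  intro H. apply nsq_zero_iff. rewrite <- vnorm_sq, H. ring.
Qed.

Lemma vnorm_triangle (x y : Hs) : vnorm (vadd x y) <= vnorm x + vnorm y.
Proof.
  pose proof (vnorm_ge0 x). pose proof (vnorm_ge0 y). pose proof (vnorm_ge0 (vadd x y)).
  apply Rsqr_incr_0_var; [|nra]. unfold Rsqr.
  rewrite vnorm_sq, nsq_add, <- (vnorm_sq x), <- (vnorm_sq y).
  pose proof (cauchy_schwarz x y). nra.
Qed.

Lemma vnorm_sub_sym (x y : Hs) : vnorm (vsub x y) = vnorm (vsub y x).
Proof.
  rewrite <- vnorm_opp. unfold vsub. rewrite vopp_add, vopp_opp, vadd_comm. reflexivity.
Qed.

Lemma vsub_add3 (x y z : Hs) : vsub x z = vadd (vsub x y) (vsub y z).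
Proof.
  unfold vsub. rewrite <- vadd_assoc, (vadd_assoc _ (vopp y)), vadd_opp_l, vadd_0_l. reflexivity.
Qed.

Lemma vnorm_sub_triangle (x y z : Hs) : vnorm (vsub x z) <= vnorm (vsub x y) + vnorm (vsub y z).
Proof. rewrite (vsub_add3 x y z). apply vnorm_triangle. Qed.

Lemma vnorm_sub_le (x y : Hs) : vnorm (vsub x y) <= vnorm x + vnorm y.
Proof. unfold vsub. rewrite <- (vnorm_opp y). apply vnorm_triangle. Qed.

Lemma vnorm_rev_triangle (x y : Hs) : vnorm x - vnorm y <= vnorm (vsub x y).
Proof.
  pose proof (vnorm_sub_triangle x y vzero).
  unfold vsub at 1 3 in H. rewrite vopp_zero, !vadd_0 in H. lra.
Qed.

End HL.


Fixpoint rsum (n : nat) (F : nat -> R) : R :=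
  match n with O => 0 | S m => rsum m F + F m end.

Lemma rsum_ext n F G : (forall i, (i < n)%nat -> F i = G i) -> rsum n F = rsum n G.
Proof. induction n; simpl; intros H; auto. rewrite IHn, H; auto. Qed.

Lemma rsum_le n F G : (forall i, (i < n)%nat -> F i <= G i) -> rsum n F <= rsum n G.
Proof. induction n; simpl; intros H. lra. pose proof (IHn (fun i Hi => H i (Nat.lt_lt_succ_r _ _ Hi))). pose proof (H n (Nat.lt_succ_diag_r n)). lra. Qed.

Lemma rsum_plus n F G : rsum n (fun i => F i + G i) = rsum n F + rsum n G.
Proof. induction n; simpl. ring. rewrite IHn. ring. Qed.

Lemma rsum_minus n F G : rsum n (fun i => F i - G i) = rsum n F - rsum n G.
Proof. induction n; simpl. ring. rewrite IHn. ring. Qed.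

Lemma rsum_scal n a F : rsum n (fun i => a * F i) = a * rsum n F.
Proof. induction n; simpl. ring. rewrite IHn. ring. Qed.

Lemma rsum_abs n F : Rabs (rsum n F) <= rsum n (fun i => Rabs (F i)).
Proof. induction n; simpl. rewrite Rabs_R0; lra. eapply Rle_trans. apply Rabs_triang. lra. Qed.

Lemma rsum_nonneg n F : (forall i, (i < n)%nat -> 0 <= F i) -> 0 <= rsum n F.
Proof. intro H. replace 0 with (rsum n (fun _ => 0)). apply rsum_le; auto. induction n; simpl; auto. rewrite IHn; auto; lra. Qed.

Section VS.
Context {Hs : HilbertSpace}.

Lemma vsum_ext n (F G : nat -> Hs) : (forall i, (i < n)%nat -> F i = G i) -> vsum Hs n F = vsum Hs n G.
Proof. induction n; simpl; intros H; auto. rewrite IHn, H; auto. Qed.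

Lemma Re_inner_vsum_r n (x : Hs) F : Re (inner x (vsum Hs n F)) = rsum n (fun i => Re (inner x (F i))).
Proof. induction n; simpl. rewrite inner_zero_r; reflexivity. rewrite Re_inner_add_r, IHn. reflexivity. Qed.

Lemma Re_inner_vsum_l n (x : Hs) F : Re (inner (vsum Hs n F) x) = rsum n (fun i => Re (inner (F i) x)).
Proof. induction n; simpl. rewrite inner_zero_l; reflexivity. rewrite Re_inner_add_l, IHn. reflexivity. Qed.

Lemma Re_inner_scalR_l a (x y : Hs) : Re (inner (vscal (Cof a) x) y) = a * Re (inner x y).
Proof. rewrite Re_inner_scal_l. simpl. ring. Qed.
Lemma Re_inner_scalR_r a (x y : Hs) : Re (inner x (vscal (Cof a) y)) = a * Re (inner x y).
Proof. rewrite Re_inner_scal_r. simpl. ring. Qed.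

Lemma Re_inner_Hsum_l n f Hop t (x y : Hs) :
  Re (inner (Hsum Hs n f Hop t x) y) = rsum n (fun i => f i t * Re (inner (Hop i x) y)).
Proof. unfold Hsum. rewrite Re_inner_vsum_l. apply rsum_ext. intros. apply Re_inner_scalR_l. Qed.

Lemma vnorm_vsum n (F : nat -> Hs) : vnorm (vsum Hs n F) <= rsum n (fun i => vnorm (F i)).
Proof. induction n; simpl. rewrite vnorm_zero; lra. eapply Rle_trans. apply vnorm_triangle. lra. Qed.

Lemma vsub_vadd (a b c d : Hs) : vsub (vadd a b) (vadd c d) = vadd (vsub a c) (vsub b d).
Proof.
  unfold vsub. rewrite vopp_add. rewrite <- !vadd_assoc. f_equal.
  rewrite !vadd_assoc. f_equal. apply vadd_comm.
Qed.

Lemma vsub_vsum n (F G : nat -> Hs) : vsub (vsum Hs n F) (vsum Hs n G) = vsum Hs n (fun i => vsub (F i) (G i)).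
Proof. induction n; simpl. apply vsub_diag. rewrite vsub_vadd, IHn. reflexivity. Qed.

Lemma vsub_scalR a b (x : Hs) : vsub (vscal (Cof a) x) (vscal (Cof b) x) = vscal (Cof (a - b)) x.
Proof. unfold vsub. rewrite vopp_scal, vscal_assoc, <- vscal_distr_c. f_equal. apply Ceq; simpl; ring. Qed.

Lemma Hsum_sub n f g Hop t t' (x : Hs) :
  vsub (Hsum Hs n f Hop t x) (Hsum Hs n g Hop t' x) = vsum Hs n (fun i => vscal (Cof (f i t - g i t')) (Hop i x)).
Proof. unfold Hsum. rewrite vsub_vsum. apply vsum_ext. intros. apply vsub_scalR. Qed.

Lemma Hsum_sub_norm n f g Hop t t' (x : Hs) :
  vnorm (vsub (Hsum Hs n f Hop t x) (Hsum Hs n g Hop t' x)) <= rsum n (fun i => Rabs (f i t - g i t') * vnorm (Hop i x)).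
Proof. rewrite Hsum_sub. eapply Rle_trans. apply vnorm_vsum. apply rsum_le. intros. rewrite vnorm_scalR. lra. Qed.

End VS.


Definition rlim (P : R -> Prop) (F : R -> R) (t L : R) : Prop :=
  forall eps, 0 < eps -> exists d, 0 < d /\
    forall r, P r -> r <> t -> Rabs (r - t) < d -> Rabs (F r - L) < eps.

Lemma Rabs_triang3 a b c : Rabs (a + b + c) <= Rabs a + Rabs b + Rabs c.
Proof. eapply Rle_trans. apply Rabs_triang. pose proof (Rabs_triang a b). lra. Qed.

Lemma rlim_const P c t : rlim P (fun _ => c) t c.
Proof. intros e He. exists 1. split. lra. intros. rewrite Rminus_diag, Rabs_R0. lra. Qed.

Lemma rlim_ext P F G t L : (forall r, P r -> r <> t -> F r = G r) -> rlim P F t L -> rlim P G t L.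
Proof. intros HE H e He. destruct (H e He) as [d [Hd H']]. exists d; split; auto. intros. rewrite <- HE; auto. Qed.

Lemma rlim_plus P F G t L M : rlim P F t L -> rlim P G t M -> rlim P (fun r => F r + G r) t (L + M).
Proof.
  intros HF HG e He. destruct (HF (e/2)) as [d1 [Hd1 H1]]. lra. destruct (HG (e/2)) as [d2 [Hd2 H2]]. lra.
  exists (Rmin d1 d2). split. apply Rmin_pos; auto. intros r Pr Hr Hd.
  specialize (H1 r Pr Hr (Rlt_le_trans _ _ _ Hd (Rmin_l _ _))).
  specialize (H2 r Pr Hr (Rlt_le_trans _ _ _ Hd (Rmin_r _ _))).
  replace (F r + G r - (L + M)) with ((F r - L) + (G r - M)) by ring.
  eapply Rle_lt_trans. apply Rabs_triang. lra.
Qed.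

Lemma rlim_opp P F t L : rlim P F t L -> rlim P (fun r => - F r) t (- L).
Proof. intros H e He. destruct (H e He) as [d [Hd H']]. exists d; split; auto. intros.
  replace (- F r - - L) with (- (F r - L)) by ring. rewrite Rabs_Ropp. auto. Qed.

Lemma rlim_scal P F t L a : rlim P F t L -> rlim P (fun r => a * F r) t (a * L).
Proof.
  intros H e He. destruct (H (e / (Rabs a + 1))) as [d [Hd H']].
  apply Rdiv_lt_0_compat; auto. pose proof (Rabs_pos a); lra.
  exists d; split; auto. intros r Pr Hr Hdr. specialize (H' r Pr Hr Hdr).
  replace (a * F r - a * L) with (a * (F r - L)) by ring. rewrite Rabs_mult.
  pose proof (Rabs_pos a). pose proof (Rabs_pos (F r - L)).
  apply Rle_lt_trans with ((Rabs a + 1) * Rabs (F r - L)). nra.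
  apply Rmult_lt_reg_l with (/ (Rabs a + 1)). apply Rinv_0_lt_compat; lra.
  rewrite <- Rmult_assoc, Rinv_l, Rmult_1_l by lra. unfold Rdiv in H'. lra.
Qed.

Lemma rlim_mult P F G t L M : rlim P F t L -> rlim P G t M -> rlim P (fun r => F r * G r) t (L * M).
Proof.
  intros HF HG e He.
  set (e1 := Rmin 1 (e / (Rabs L + Rabs M + 1))).
  assert (He1 : 0 < e1). { unfold e1. apply Rmin_pos. lra. apply Rdiv_lt_0_compat; auto. pose proof (Rabs_pos L); pose proof (Rabs_pos M); lra. }
  destruct (HF e1 He1) as [d1 [Hd1 H1]]. destruct (HG e1 He1) as [d2 [Hd2 H2]].
  exists (Rmin d1 d2). split. apply Rmin_pos; auto. intros r Pr Hr Hd.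
  specialize (H1 r Pr Hr (Rlt_le_trans _ _ _ Hd (Rmin_l _ _))).
  specialize (H2 r Pr Hr (Rlt_le_trans _ _ _ Hd (Rmin_r _ _))).
  replace (F r * G r - L * M) with ((F r - L) * (G r - M) + (F r - L) * M + L * (G r - M)) by ring.
  assert (e1 <= 1) by apply Rmin_l.
  assert (Hle : e1 * (Rabs L + Rabs M + 1) <= e).
  { unfold e1. pose proof (Rabs_pos L); pose proof (Rabs_pos M).
    apply Rle_trans with (e / (Rabs L + Rabs M + 1) * (Rabs L + Rabs M + 1)).
    apply Rmult_le_compat_r. lra. apply Rmin_r. right. field. lra. }
  pose proof (Rabs_pos L); pose proof (Rabs_pos M).
  pose proof (Rabs_pos (F r - L)); pose proof (Rabs_pos (G r - M)).
  eapply Rle_lt_trans. apply Rabs_triang3.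
  rewrite !Rabs_mult.
  assert (Rabs (F r - L) * Rabs (G r - M) < e1 * 1).
  { apply Rle_lt_trans with (Rabs (F r - L) * 1). apply Rmult_le_compat_l; lra. lra. }
  nra.
Qed.

Lemma rlim_rsum P n (F : nat -> R -> R) t (L : nat -> R) :
  (forall i, (i < n)%nat -> rlim P (F i) t (L i)) ->
  rlim P (fun r => rsum n (fun i => F i r)) t (rsum n L).
Proof.
  induction n; simpl; intros H. apply rlim_const.
  apply rlim_plus. apply IHn. intros; apply H; lia. apply H; lia.
Qed.

Lemma rlim_eps P F t L : rlim P F t L -> forall eps, 0 < eps -> exists d, 0 < d /\
  forall r, P r -> r <> t -> Rabs (r - t) < d -> Rabs (F r - L) < eps.
Proof. auto. Qed.

Section VL.
Context {Hs : HilbertSpace}.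

Definition vlim (P : R -> Prop) (F : R -> Hs) (t : R) (v : Hs) : Prop :=
  forall eps, 0 < eps -> exists d, 0 < d /\
    forall r, P r -> r <> t -> Rabs (r - t) < d -> vnorm (vsub (F r) v) < eps.

Lemma vsub_add_cancel (x a : Hs) : vadd (vsub x a) a = x.
Proof. unfold vsub. rewrite <- vadd_assoc, vadd_opp_l, vadd_0. reflexivity. Qed.

Lemma Re_inner_sub_r (x y z : Hs) : Re (inner x (vsub y z)) = Re (inner x y) - Re (inner x z).
Proof. unfold vsub. rewrite Re_inner_add_r, Re_inner_opp_r. ring. Qed.
Lemma Re_inner_sub_l (x y z : Hs) : Re (inner (vsub x y) z) = Re (inner x z) - Re (inner y z).
Proof. unfold vsub. rewrite Re_inner_add_l, Re_inner_opp_l. ring. Qed.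

Lemma vlim_bound_rlim P F t v (B : R -> R) :
  (forall r, P r -> r <> t -> vnorm (vsub (F r) v) <= B r) -> rlim P B t 0 -> vlim P F t v.
Proof.
  intros HB H e He. destruct (H e He) as [d [Hd H']]. exists d; split; auto. intros r Pr Hr Hdr.
  specialize (H' r Pr Hr Hdr). rewrite Rminus_0_r in H'. specialize (HB r Pr Hr).
  pose proof (Rle_abs (B r)). lra.
Qed.

Lemma rlim_Re_inner_strong P (F G : R -> Hs) t a b :
  vlim P F t a -> vlim P G t b -> rlim P (fun r => Re (inner (F r) (G r))) t (Re (inner a b)).
Proof.
  intros HF HG.
  assert (E : forall r, Re (inner (F r) (G r)) =
     Re (inner (vsub (F r) a) (vsub (G r) b)) + Re (inner (vsub (F r) a) b) + Re (inner a (vsub (G r) b)) + Re (inner a b)).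
  { intro r. rewrite !Re_inner_sub_r, !Re_inner_sub_l. ring. }
  intros e He.
  set (e1 := Rmin 1 (e / (vnorm a + vnorm b + 1))).
  assert (He1 : 0 < e1). { unfold e1. apply Rmin_pos. lra. apply Rdiv_lt_0_compat; auto. pose proof (vnorm_ge0 a); pose proof (vnorm_ge0 b); lra. }
  destruct (HF e1 He1) as [d1 [Hd1 H1]]. destruct (HG e1 He1) as [d2 [Hd2 H2]].
  exists (Rmin d1 d2). split. apply Rmin_pos; auto. intros r Pr Hr Hd.
  specialize (H1 r Pr Hr (Rlt_le_trans _ _ _ Hd (Rmin_l _ _))).
  specialize (H2 r Pr Hr (Rlt_le_trans _ _ _ Hd (Rmin_r _ _))).
  rewrite E. replace (Re (inner (vsub (F r) a) (vsub (G r) b)) + Re (inner (vsub (F r) a) b) +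
     Re (inner a (vsub (G r) b)) + Re (inner a b) - Re (inner a b)) with
     (Re (inner (vsub (F r) a) (vsub (G r) b)) + Re (inner (vsub (F r) a) b) + Re (inner a (vsub (G r) b))) by ring.
  pose proof (cauchy_schwarz_abs (vsub (F r) a) (vsub (G r) b)).
  pose proof (cauchy_schwarz_abs (vsub (F r) a) b).
  pose proof (cauchy_schwarz_abs a (vsub (G r) b)).
  assert (e1 <= 1) by apply Rmin_l.
  assert (Hle : e1 * (vnorm a + vnorm b + 1) <= e).
  { unfold e1. pose proof (vnorm_ge0 a); pose proof (vnorm_ge0 b).
    apply Rle_trans with (e / (vnorm a + vnorm b + 1) * (vnorm a + vnorm b + 1)).
    apply Rmult_le_compat_r. lra. apply Rmin_r. right. field. lra. }
  pose proof (vnorm_ge0 a); pose proof (vnorm_ge0 b).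
  pose proof (vnorm_ge0 (vsub (F r) a)); pose proof (vnorm_ge0 (vsub (G r) b)).
  eapply Rle_lt_trans. apply Rabs_triang3.
  assert (vnorm (vsub (F r) a) * vnorm (vsub (G r) b) < e1 * 1).
  { apply Rle_lt_trans with (vnorm (vsub (F r) a) * 1). apply Rmult_le_compat_l; lra. lra. }
  nra.
Qed.

Lemma rlim_Re_inner_weak P (F G : R -> Hs) t a b S d0 :
  vlim P F t a -> 0 < d0 ->
  (forall r, P r -> r <> t -> Rabs (r - t) < d0 -> vnorm (G r) <= S) ->
  rlim P (fun r => Re (inner a (G r))) t (Re (inner a b)) ->
  rlim P (fun r => Re (inner (F r) (G r))) t (Re (inner a b)).
Proof.
  intros HF Hd0 HB HW.
  assert (E : forall r, Re (inner (F r) (G r)) = Re (inner (vsub (F r) a) (G r)) + Re (inner a (G r))).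
  { intro r. rewrite Re_inner_sub_l. ring. }
  intros e He.
  assert (HS : 0 <= S \/ forall r, ~ (P r /\ r <> t /\ Rabs (r - t) < d0)).
  { destruct (Rle_or_lt 0 S). auto. right. intros r [Pr [Hr Hd]]. specialize (HB r Pr Hr Hd).
    pose proof (vnorm_ge0 (G r)). lra. }
  set (S' := Rmax S 0).
  destruct (HF (e / 2 / (S' + 1))) as [d1 [Hd1 H1]].
  { apply Rdiv_lt_0_compat. lra. unfold S'. pose proof (Rmax_r S 0). lra. }
  destruct (HW (e/2)) as [d2 [Hd2 H2]]. lra.
  exists (Rmin d0 (Rmin d1 d2)). split. repeat apply Rmin_pos; auto. intros r Pr Hr Hd.
  assert (Hd0' : Rabs (r - t) < d0) by (eapply Rlt_le_trans; [apply Hd| apply Rmin_l]).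
  assert (Hd1' : Rabs (r - t) < d1) by (eapply Rlt_le_trans; [apply Hd| eapply Rle_trans; [apply Rmin_r|apply Rmin_l]]).
  assert (Hd2' : Rabs (r - t) < d2) by (eapply Rlt_le_trans; [apply Hd| eapply Rle_trans; [apply Rmin_r|apply Rmin_r]]).
  specialize (H1 r Pr Hr Hd1'). specialize (H2 r Pr Hr Hd2'). specialize (HB r Pr Hr Hd0').
  rewrite E. replace (Re (inner (vsub (F r) a) (G r)) + Re (inner a (G r)) - Re (inner a b))
    with (Re (inner (vsub (F r) a) (G r)) + (Re (inner a (G r)) - Re (inner a b))) by ring.
  eapply Rle_lt_trans. apply Rabs_triang.
  pose proof (cauchy_schwarz_abs (vsub (F r) a) (G r)).
  assert (HS' : vnorm (G r) <= S'). { unfold S'. eapply Rle_trans. apply HB. apply Rmax_l. }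
  pose proof (vnorm_ge0 (G r)). pose proof (vnorm_ge0 (vsub (F r) a)).
  assert (vnorm (vsub (F r) a) * vnorm (G r) <= e / 2).
  { apply Rle_trans with (e / 2 / (S' + 1) * (S' + 1)).
    apply Rmult_le_compat; try lra. right. field. lra. }
  lra.
Qed.

Lemma weak_dense P (G : R -> Hs) t b S d0 (D : Hs -> Prop) :
  dense Hs D -> 0 < d0 ->
  (forall r, P r -> r <> t -> Rabs (r - t) < d0 -> vnorm (G r) <= S) ->
  (forall z, D z -> rlim P (fun r => Re (inner z (G r))) t (Re (inner z b))) ->
  forall z, rlim P (fun r => Re (inner z (G r))) t (Re (inner z b)).
Proof.
  intros HD Hd0 HB HW z e He.
  set (S' := Rmax S 0 + vnorm b + 1).
  assert (HS'0 : 1 <= S'). { unfold S'. pose proof (Rmax_r S 0). pose proof (vnorm_ge0 b). lra. }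
  destruct (HD z (e / 3 / S')) as [z' [Dz' Hz']]. apply Rdiv_lt_0_compat; lra.
  destruct (HW z' Dz' (e/3)) as [d [Hd H]]. lra.
  exists (Rmin d d0). split. apply Rmin_pos; auto. intros r Pr Hr Hdr.
  specialize (H r Pr Hr (Rlt_le_trans _ _ _ Hdr (Rmin_l _ _))).
  specialize (HB r Pr Hr (Rlt_le_trans _ _ _ Hdr (Rmin_r _ _))).
  replace (Re (inner z (G r)) - Re (inner z b)) with
    (Re (inner (vsub z z') (G r)) + (Re (inner z' (G r)) - Re (inner z' b)) - Re (inner (vsub z z') b))
    by (rewrite !Re_inner_sub_l; ring).
  pose proof (cauchy_schwarz_abs (vsub z z') (G r)).
  pose proof (cauchy_schwarz_abs (vsub z z') b).
  pose proof (vnorm_ge0 (vsub z z')). pose proof (vnorm_ge0 b). pose proof (vnorm_ge0 (G r)).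
  assert (HGr : vnorm (G r) <= S'). { unfold S'. pose proof (Rmax_l S 0). lra. }
  assert (Hb : vnorm b <= S'). { unfold S'. pose proof (Rmax_r S 0). lra. }
  assert (Hm : vnorm (vsub z z') * S' <= e / 3).
  { apply Rle_trans with (e / 3 / S' * S'). apply Rmult_le_compat_r; lra. right; field; lra. }
  assert (vnorm (vsub z z') * vnorm (G r) <= e/3). { eapply Rle_trans; [|apply Hm]. apply Rmult_le_compat_l; lra. }
  assert (vnorm (vsub z z') * vnorm b <= e/3). { eapply Rle_trans; [|apply Hm]. apply Rmult_le_compat_l; lra. }
  unfold Rminus at 1. eapply Rle_lt_trans. apply Rabs_triang. rewrite Rabs_Ropp.
  eapply Rle_lt_trans. apply Rplus_le_compat_r. apply Rabs_triang. lra.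
Qed.

Lemma deriv_vlim (I P : R -> Prop) (F : R -> Hs) t v :
  (forall r, P r -> I r) -> has_vderiv_in Hs I F t v ->
  vlim P (fun r => vscal (Cof (/ (r - t))) (vsub (F r) (F t))) t v.
Proof.
  intros HPI H e He. destruct (H e He) as [d [Hd H']]. exists d; split; auto.
  intros r Pr Hr Hdr. specialize (H' (r - t)).
  replace (t + (r - t)) with r in H' by ring. apply H'; auto. lra.
Qed.

Lemma vscal_inv_cancel h (x : Hs) : h <> 0 -> vscal (Cof h) (vscal (Cof (/ h)) x) = x.
Proof. intro Hh. rewrite vscal_assoc. rewrite <- (vscal_1 _ x) at 2. f_equal. apply Ceq; simpl; field; auto. Qed.

Lemma vnorm_diffq_bound (x v : Hs) h : h <> 0 ->
  vnorm (vsub (vscal (Cof (/ h)) x) v) < 1 -> vnorm x <= Rabs h * (vnorm v + 1).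
Proof.
  intros Hh H. rewrite <- (vscal_inv_cancel h x Hh), vnorm_scalR.
  apply Rmult_le_compat_l. apply Rabs_pos.
  pose proof (vnorm_rev_triangle (vscal (Cof (/ h)) x) v). lra.
Qed.

Lemma deriv_cont P (F : R -> Hs) t v :
  vlim P (fun r => vscal (Cof (/ (r - t))) (vsub (F r) (F t))) t v ->
  vlim P F t (F t).
Proof.
  intros H e He. destruct (H 1 Rlt_0_1) as [d [Hd H']].
  pose proof (vnorm_ge0 v).
  exists (Rmin d (e / (vnorm v + 1))). split. apply Rmin_pos; auto. apply Rdiv_lt_0_compat; lra.
  intros r Pr Hr Hdr.
  assert (Hrt : r - t <> 0) by lra.
  pose proof (vnorm_diffq_bound _ _ _ Hrt (H' r Pr Hr (Rlt_le_trans _ _ _ Hdr (Rmin_l _ _)))).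
  assert (Rabs (r - t) * (vnorm v + 1) < e).
  { apply Rlt_le_trans with (e / (vnorm v + 1) * (vnorm v + 1)).
    apply Rmult_lt_compat_r. lra. eapply Rlt_le_trans. apply Hdr. apply Rmin_r. right; field; lra. }
  lra.
Qed.

End VL.


Lemma lub_approx (S : R -> Prop) z eta : is_lub S z -> 0 < eta -> exists x, S x /\ z - eta < x /\ x <= z.
Proof.
  intros [H1 H2] He. destruct (classic (exists x, S x /\ z - eta < x)) as [[x [Sx Hx]]|Hn].
  - exists x. split; auto.
  - exfalso. assert (z <= z - eta). { apply H2. intros x Sx. apply Rnot_lt_le. intro. apply Hn. eauto. } lra.
Qed.

Lemma mvt_ub (F : R -> R) a b L : a <= b ->
  (forall t, a <= t <= b -> forall eps, 0 < eps -> exists d, 0 < d /\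
     forall x, a <= x <= b -> Rabs (x - t) < d ->
       (x < t -> F t - F x <= (L + eps) * (t - x)) /\
       (t < x -> F x - F t <= (L + eps) * (x - t))) ->
  F b - F a <= L * (b - a).
Proof.
  intros Hab HD.
  assert (Heps : forall eps, 0 < eps -> F b - F a <= (L + eps) * (b - a)).
  { intros eps He.
    set (S := fun x => a <= x <= b /\ F x - F a <= (L + eps) * (x - a)).
    assert (Hb : bound S). { exists b. intros x [Hx _]. lra. }
    assert (HSa : S a). { unfold S. split. lra. ring_simplify. lra. }
    destruct (completeness S Hb (ex_intro _ a HSa)) as [z Hz].
    assert (Haz : a <= z). { apply Hz; auto. }
    assert (Hzb : z <= b). { apply Hz. intros x [Hx _]. lra. }
    destruct (HD z (conj Haz Hzb) eps He) as [d [Hd Hd']].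
    assert (HzS : S z).
    { destruct (lub_approx S z d Hz Hd) as [x [Sx [Hx1 Hx2]]].
      destruct (Req_dec x z) as [E|E]. subst; auto.
      destruct Sx as [Hxab Hx]. split. lra.
      destruct (Hd' x Hxab) as [Hl _]. rewrite Rabs_left; lra.
      specialize (Hl ltac:(lra)). nra. }
    destruct (Req_dec z b) as [E|E]. { subst z. apply HzS. }
    exfalso. set (x := Rmin (z + d / 2) b).
    assert (Hx1 : z < x). { unfold x. apply Rmin_glb_lt; lra. }
    assert (Hx2 : x <= b) by apply Rmin_r.
    assert (Hx3 : x <= z + d / 2) by apply Rmin_l.
    destruct (Hd' x ltac:(lra)) as [_ Hr]. rewrite Rabs_right; lra.
    specialize (Hr Hx1). destruct HzS as [_ HzS].
    assert (S x). { split. lra. nra. }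
    assert (x <= z) by (apply Hz; auto). lra. }
  apply Rnot_lt_le. intro Hc.
  assert (Hba : 0 < b - a). { destruct (Req_dec a b). subst. lra. lra. }
  set (eps := (F b - F a - L * (b - a)) / (2 * (b - a))).
  assert (He : 0 < eps). { unfold eps. apply Rdiv_lt_0_compat; lra. }
  specialize (Heps eps He).
  assert (eps * (b - a) = (F b - F a - L * (b - a)) / 2). { unfold eps. field. lra. }
  nra.
Qed.

Lemma loc_bounded_compact (m : R -> R) p q : p <= q ->
  (forall t, p <= t <= q -> exists rho S, 0 < rho /\ forall r, p <= r <= q -> Rabs (r - t) < rho -> m r <= S) ->
  exists S, forall r, p <= r <= q -> m r <= S.
Proof.
  intros Hpq HL.
  set (Z := fun z => p <= z <= q /\ exists S, forall r, p <= r <= z -> m r <= S).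
  assert (HZp : Z p).
  { split. lra. destruct (HL p ltac:(lra)) as [rho [S [Hr HS]]]. exists S. intros r Hr'.
    apply HS. lra. replace (r - p) with 0 by lra. rewrite Rabs_R0. lra. }
  assert (Hb : bound Z). { exists q. intros x [Hx _]. lra. }
  destruct (completeness Z Hb (ex_intro _ p HZp)) as [z Hz].
  assert (Hpz : p <= z) by (apply Hz; auto).
  assert (Hzq : z <= q). { apply Hz. intros x [Hx _]. lra. }
  destruct (HL z ltac:(lra)) as [rho [S1 [Hrho HS1]]].
  destruct (lub_approx Z z (rho/2) Hz ltac:(lra)) as [x [[Hxpq [S2 HS2]] [Hx1 Hx2]]].
  assert (Hext : forall w, z <= w <= q -> w < z + rho / 2 -> forall r, p <= r <= w -> m r <= Rmax S1 S2).
  { intros w Hw Hw2 r Hr. destruct (Rle_or_lt r x).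
    - eapply Rle_trans. apply HS2. lra. apply Rmax_r.
    - eapply Rle_trans. apply HS1. lra. apply Rabs_def1; lra. apply Rmax_l. }
  destruct (Req_dec z q) as [E|E].
  - subst z. exists (Rmax S1 S2). intros r Hr. apply (Hext q); lra.
  - exfalso. set (w := Rmin (z + rho / 4) q).
    assert (z < w). { unfold w. apply Rmin_glb_lt; lra. }
    assert (w <= q) by apply Rmin_r. assert (w <= z + rho/4) by apply Rmin_l.
    assert (Z w). { split. lra. exists (Rmax S1 S2). apply Hext; lra. }
    assert (w <= z) by (apply Hz; auto). lra.
Qed.


Section Baire.
Variables (B : R -> Prop) (E : nat -> R -> Prop) (s T : R).

Definition goodI (pq : R * R) := fst pq < snd pq /\ exists x, B x /\ fst pq < x < snd pq.

Definition stepP (N : nat) (pq pq' : R * R) :=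
  goodI pq' /\ fst pq < fst pq' /\ snd pq' < snd pq /\ snd pq' - fst pq' <= / INR (S N) /\
  forall y, fst pq' <= y <= snd pq' -> ~ E N y.

Definition stepf (N : nat) (pq : R * R) : R * R :=
  epsilon (inhabits pq) (fun pq' => goodI pq -> stepP N pq pq').

Fixpoint bseq (k : nat) : R * R :=
  match k with O => (s - 1, T + 1) | S j => stepf j (bseq j) end.

End Baire.

Lemma baire (B : R -> Prop) (E : nat -> R -> Prop) s T :
  (forall x, B x -> s <= x <= T) ->
  (forall x, s <= x <= T -> (forall eps, 0 < eps -> exists y, B y /\ Rabs (y - x) < eps) -> B x) ->
  (forall N x, s <= x <= T -> (forall eps, 0 < eps -> exists y, E N y /\ Rabs (y - x) < eps) -> E N x) ->
  (forall x, B x -> exists N, E N x) ->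
  (exists x, B x) ->
  exists N p q, p < q /\ (exists x, B x /\ p < x < q) /\ (forall x, B x -> p < x < q -> E N x).
Proof.
  intros HBs HBc HEc Hcov [x0 Hx0].
  apply NNPP. intro Hn.
  assert (Hstep : forall N pq, goodI B pq -> exists pq', stepP B E N pq pq').
  { intros N [p q] [Hpq [x [Bx Hx]]]. simpl in *.
    assert (Hx' : exists x, B x /\ p < x < q /\ ~ E N x).
    { apply NNPP. intro H2. apply Hn. exists N, p, q. split; auto. split. eauto.
      intros y By Hy. apply NNPP. intro H3. apply H2. eauto. }
    destruct Hx' as [y [By [Hy HEy]]].
    assert (Heps : exists eps, 0 < eps /\ forall w, E N w -> eps <= Rabs (w - y)).
    { apply NNPP. intro H4. apply HEy. apply HEc. apply HBs; auto.
      intros e He. apply NNPP. intro H5. apply H4. exists e. split; auto.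
      intros w Ew. apply Rnot_lt_le. intro H6. apply H5. exists w. auto. }
    destruct Heps as [eps [Heps HE]].
    assert (HN : 0 < / INR (S N)). { apply Rinv_0_lt_compat. apply lt_0_INR. lia. }
    set (r := Rmin (Rmin eps (y - p)) (Rmin (q - y) (/ INR (S N))) / 2).
    assert (Hr0 : 0 < r). { unfold r. apply Rdiv_lt_0_compat; [repeat apply Rmin_pos; lra | lra]. }
    assert (Hr1 : r < eps). { unfold r. pose proof (Rmin_l (Rmin eps (y - p)) (Rmin (q - y) (/ INR (S N)))). pose proof (Rmin_l eps (y-p)). lra. }
    assert (Hr2 : r < y - p). { unfold r. pose proof (Rmin_l (Rmin eps (y - p)) (Rmin (q - y) (/ INR (S N)))). pose proof (Rmin_r eps (y-p)). lra. }
    assert (Hr3 : r < q - y). { unfold r. pose proof (Rmin_r (Rmin eps (y - p)) (Rmin (q - y) (/ INR (S N)))). pose proof (Rmin_l (q - y) (/ INR (S N))). lra. }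
    assert (Hr4 : 2 * r <= / INR (S N)). { unfold r. pose proof (Rmin_r (Rmin eps (y - p)) (Rmin (q - y) (/ INR (S N)))). pose proof (Rmin_r (q - y) (/ INR (S N))). lra. }
    exists (y - r, y + r). unfold stepP, goodI; cbn [fst snd]. split. { split. lra. exists y; split; auto; lra. }
    split. lra. split. lra. split. lra.
    intros w Hw Ew. specialize (HE w Ew). assert (Rabs (w - y) <= r) by (apply Rabs_le; split; lra). lra. }
  set (sq := bseq B E s T).
  assert (Hsp : forall k, goodI B (sq k) -> stepP B E k (sq k) (sq (S k))).
  { intros k Hk. change (sq (S k)) with (stepf B E k (sq k)). unfold stepf.
    apply (epsilon_spec (inhabits (sq k)) (fun pq' => goodI B (sq k) -> stepP B E k (sq k) pq')); auto.
    destruct (Hstep k _ Hk) as [pq' H]. exists pq'. auto. }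
  assert (Hinv : forall k, goodI B (sq k)).
  { induction k.
    - unfold sq; simpl. unfold goodI; cbn [fst snd]. pose proof (HBs x0 Hx0). split. lra. exists x0. split; auto. lra.
    - apply (Hsp k IHk). }
  assert (Hmono : forall k j, (k <= j)%nat -> fst (sq k) <= fst (sq j) /\ snd (sq j) <= snd (sq k)).
  { intros k j Hkj. induction Hkj. lra.
    destruct (Hsp m (Hinv m)) as [_ [H1 [H2 _]]]. lra. }
  assert (Hnest : forall k j, fst (sq k) < snd (sq j)).
  { intros k j. destruct (Compare_dec.le_lt_dec k j) as [Hkj|Hkj].
    - destruct (Hmono k j Hkj). destruct (Hinv j). lra.
    - destruct (Hmono j k ltac:(lia)). destruct (Hinv k). lra. }
  set (A := fun x => exists k, x = fst (sq k)).
  assert (HAb : bound A). { exists (snd (sq O)). intros x [k ->]. left. apply Hnest. }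
  destruct (completeness A HAb (ex_intro _ (fst (sq O)) (ex_intro _ O eq_refl))) as [z Hz].
  assert (Hz1 : forall k, fst (sq k) <= z). { intro k. apply Hz. exists k; auto. }
  assert (Hz2 : forall k, z <= snd (sq k)). { intro k. apply Hz. intros x [j ->]. left. apply Hnest. }
  assert (Hnot : forall k, ~ E k z).
  { intro k. destruct (Hsp k (Hinv k)) as [_ [_ [_ [_ H]]]]. apply H. split; auto. }
  assert (Hclose : forall eps, 0 < eps -> exists y, B y /\ Rabs (y - z) < eps).
  { intros eps He. destruct (archimed (/ eps)) as [Har _].
    assert (Hk : exists k : nat, / INR (S k) < eps).
    { exists (Z.to_nat (up (/ eps))).
      assert (0 < / eps) by (apply Rinv_0_lt_compat; auto).
      assert (IZR (up (/ eps)) = INR (Z.to_nat (up (/ eps)))).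
      { rewrite INR_IZR_INZ, Z2Nat.id. reflexivity. apply le_IZR. lra. }
      rewrite S_INR. apply Rlt_le_trans with (/ (/ eps)). apply Rinv_lt_contravar. nra. lra.
      rewrite Rinv_inv. lra. }
    destruct Hk as [k Hk]. destruct (Hsp k (Hinv k)) as [[_ [y [By Hy]]] [_ [_ [Hlen _]]]].
    exists y. split; auto. pose proof (Hz1 (S k)). pose proof (Hz2 (S k)). apply Rabs_def1; lra. }
  assert (Hzs : s <= z <= T).
  { split; apply Rnot_lt_le; intro Hc.
    - destruct (Hclose (s - z) ltac:(lra)) as [y [By Hy]]. pose proof (HBs y By). apply Rabs_def2 in Hy. lra.
    - destruct (Hclose (z - T) ltac:(lra)) as [y [By Hy]]. pose proof (HBs y By). apply Rabs_def2 in Hy. lra. }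
  assert (Bz : B z) by (apply HBc; auto).
  destruct (Hcov z Bz) as [N HN]. apply (Hnot N HN).
Qed.


Lemma Rabs_le_inv a b : Rabs a <= b -> - b <= a <= b.
Proof. unfold Rabs. destruct (Rcase_abs a); intros; split; lra. Qed.

Lemma rlim_abs P F t L : rlim P F t L -> rlim P (fun r => Rabs (F r)) t (Rabs L).
Proof. intros H e He. destruct (H e He) as [d [Hd H']]. exists d; split; auto. intros.
  eapply Rle_lt_trans. apply Rabs_triang_inv2. auto. Qed.

Lemma rlim_id P t : rlim P (fun r => r - t) t 0.
Proof. intros e He. exists e. split; auto. intros. rewrite Rminus_0_r. auto. Qed.

Lemma deriv_rlim (I P : R -> Prop) (g : R -> R) g' t :
  (forall r, P r -> I r) ->
  (forall eps, 0 < eps -> exists d, 0 < d /\ forall h, h <> 0 -> I (t + h) -> Rabs h < d ->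
      Rabs ((g (t + h) - g t) / h - g') < eps) ->
  rlim P (fun r => (g r - g t) / (r - t)) t g'.
Proof.
  intros HPI H e He. destruct (H e He) as [d [Hd H']]. exists d; split; auto.
  intros r Pr Hr Hdr. specialize (H' (r - t)). replace (t + (r - t)) with r in H' by ring.
  apply H'; auto. lra.
Qed.

Lemma deriv_rlim_cont P (g : R -> R) g' t :
  rlim P (fun r => (g r - g t) / (r - t)) t g' -> rlim P g t (g t).
Proof.
  intro H. pose proof (rlim_mult _ _ _ _ _ _ (rlim_id P t) H) as H2.
  rewrite Rmult_0_l in H2.
  pose proof (rlim_plus _ _ _ _ _ _ H2 (rlim_const P (g t) t)) as H3. rewrite Rplus_0_l in H3.
  eapply rlim_ext; [|apply H3]. intros r _ Hr. simpl. field. lra.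
Qed.

Lemma rlim_to_mvt (F : R -> R) (c : R -> R) a b L : a <= b ->
  (forall t, a <= t <= b -> rlim (fun r => a <= r <= b) (fun r => (F r - F t) / (r - t)) t (c t)) ->
  (forall t, a <= t <= b -> c t <= L) ->
  F b - F a <= L * (b - a).
Proof.
  intros Hab HR Hc. apply mvt_ub; auto. intros t Ht eps He.
  destruct (HR t Ht eps He) as [d [Hd H]]. exists d; split; auto. intros x Hx Hdx.
  specialize (Hc t Ht). split; intro Hxt.
  - specialize (H x Hx ltac:(lra) Hdx). apply Rabs_def2 in H. destruct H as [H1 H2].
    assert ((F x - F t) / (x - t) <= L + eps) by lra.
    replace (F t - F x) with ((F x - F t) / (x - t) * (t - x)) by (field; lra).
    apply Rmult_le_compat_r; lra.
  - specialize (H x Hx ltac:(lra) Hdx). apply Rabs_def2 in H. destruct H as [H1 H2].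
    assert ((F x - F t) / (x - t) <= L + eps) by lra.
    replace (F x - F t) with ((F x - F t) / (x - t) * (x - t)) by (field; lra).
    apply Rmult_le_compat_r; lra.
Qed.

Lemma rlim_to_mvt_abs (F : R -> R) (c : R -> R) a b L : a <= b ->
  (forall t, a <= t <= b -> rlim (fun r => a <= r <= b) (fun r => (F r - F t) / (r - t)) t (c t)) ->
  (forall t, a <= t <= b -> Rabs (c t) <= L) ->
  Rabs (F b - F a) <= L * (b - a).
Proof.
  intros Hab HR Hc. apply Rabs_le. split.
  - assert (- F b - - F a <= L * (b - a)).
    { apply (rlim_to_mvt (fun r => - F r) (fun r => - c r)); auto.
      - intros t Ht. eapply rlim_ext; [|apply rlim_opp, HR; auto]. intros. simpl. field. lra.
      - intros t Ht. specialize (Hc t Ht). apply Rabs_le_inv in Hc. lra. }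
    lra.
  - apply (rlim_to_mvt F c); auto. intros t Ht. specialize (Hc t Ht). apply Rabs_le_inv in Hc. lra.
Qed.

Section VL2.
Context {Hs : HilbertSpace}.

Lemma vlim_const P t (x : Hs) : vlim P (fun _ => x) t x.
Proof. intros e He. exists 1. split. lra. intros. rewrite vsub_diag, vnorm_zero. auto. Qed.

Lemma dense_norm_bound (D : Hs -> Prop) (w : Hs) A : dense Hs D -> 0 <= A ->
  (forall z, D z -> Re (inner z w) <= vnorm z * A) -> vnorm w <= A.
Proof.
  intros HD HA H. apply Rnot_lt_le. intro Hc.
  set (eta := (vnorm w - A) / 2).
  assert (Heta : 0 < eta) by (unfold eta; lra).
  destruct (HD w eta Heta) as [z [Dz Hz]].
  specialize (H z Dz).
  assert (E : Re (inner z w) = nsq w - Re (inner (vsub w z) w)).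
  { rewrite Re_inner_sub_l. unfold nsq. ring. }
  pose proof (cauchy_schwarz_abs (vsub w z) w).
  pose proof (vnorm_sub_triangle z w vzero). unfold vsub at 1 3 in H1.
  rewrite vopp_zero, !vadd_0 in H1. rewrite vnorm_sub_sym in H1.
  rewrite <- vnorm_sq in E. pose proof (vnorm_ge0 w). pose proof (vnorm_ge0 z).
  pose proof (vnorm_ge0 (vsub w z)).
  assert (vnorm (vsub w z) * vnorm w <= eta * vnorm w) by (apply Rmult_le_compat_r; lra).
  assert (vnorm z * A <= (vnorm w + eta) * A) by (apply Rmult_le_compat_r; lra).
  apply Rabs_le_inv in H0. unfold eta in *. nra.
Qed.

End VL2.


Section Core.
Context (Hs : HilbertSpace) (n : nat) (Hop : nat -> Hs -> Hs)
  (D : Hs -> Prop) (I : R -> Prop) (f : nat -> R -> R) (U : R -> R -> Hs -> Hs).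
Context (Hsym : forall i, (i < n)%nat -> symmetric_op Hs D (Hop i))
  (HI : is_interval I) (Hi : hyp_i Hs I D n f Hop) (HU : propagator_of Hs I D n f Hop U).
Context (fp : nat -> R -> R)
  (Hfp : forall i, (i < n)%nat -> forall t, I t -> forall eps, 0 < eps -> exists d, 0 < d /\
       forall h, h <> 0 -> I (t + h) -> Rabs h < d ->
         Rabs ((f i (t + h) - f i t) / h - fp i t) < eps).
Context (Psi : Hs) (s T : R) (HPsi : D Psi) (Is : I s) (IT : I T) (HsT : s < T).

Definition Hf t x := Hsum Hs n f Hop t x.
Definition phi t := U t s Psi.
Definition vv t := Hf t (phi t).
Definition MM t := vnorm (vv t).

Lemma J_I r : s <= r <= T -> I r.
Proof. intros [H1 H2]. apply (HI s r T); auto. Qed.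

Lemma D_dense : dense Hs D.
Proof. destruct (Hi s Is) as [[_ [HD _]] _]. exact HD. Qed.

Lemma Hf_sym t x y : I t -> D x -> D y -> inner (Hf t x) y = inner x (Hf t y).
Proof. intros It Dx Dy. destruct (Hi t It) as [[_ [_ [_ H]]] _]. apply H; auto. Qed.

Lemma Hop_sym i x y : (i < n)%nat -> D x -> D y -> inner (Hop i x) y = inner x (Hop i y).
Proof. intros Hin Dx Dy. destruct (Hsym i Hin) as [_ [_ [_ H]]]. apply H; auto. Qed.

Lemma U_D t y x : I t -> I y -> D x -> D (U t y x).
Proof. intros It Iy Dx. destruct HU as [_ Hsol]. destruct (Hsol y x Iy Dx) as [H _]. auto. Qed.

Lemma U_deriv t y x : I t -> I y -> D x ->
  has_vderiv_in Hs I (fun r => U r y x) t (vscal (mkC 0 (-1)) (Hf t (U t y x))).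
Proof. intros It Iy Dx. destruct HU as [_ Hsol]. destruct (Hsol y x Iy Dx) as [_ H]. apply H; auto. Qed.

Lemma U_norm t y x : I t -> I y -> vnorm (U t y x) = vnorm x.
Proof. intros It Iy. destruct HU as [[H _] _]. destruct (H t y It Iy) as [_ [Hiso _]].
  unfold vnorm. rewrite Hiso. reflexivity. Qed.

Lemma U_id t x : I t -> U t t x = x.
Proof. intros It. destruct HU as [[_ [_ [H _]]] _]. auto. Qed.

Lemma phi_norm t : s <= t <= T -> vnorm (phi t) = vnorm Psi.
Proof. intro Ht. apply U_norm; auto. apply J_I; auto. Qed.

Lemma f_cont i P t : (i < n)%nat -> I t -> (forall r, P r -> I r) -> rlim P (f i) t (f i t).
Proof. intros Hin It HP. eapply deriv_rlim_cont. apply (deriv_rlim I); auto. Qed.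

Lemma Hf_cont P t x : I t -> (forall r, P r -> I r) -> vlim P (fun r => Hf r x) t (Hf t x).
Proof.
  intros It HP. apply vlim_bound_rlim with (B := fun r => rsum n (fun i => Rabs (f i r - f i t) * vnorm (Hop i x))).
  - intros r _ _. apply Hsum_sub_norm.
  - replace 0 with (rsum n (fun i => Rabs (f i t - f i t) * vnorm (Hop i x))).
    + apply rlim_rsum. intros i Hin. apply rlim_mult. 2: apply rlim_const.
      apply rlim_abs. apply (rlim_plus _ _ _ _ _ _ (f_cont i P t Hin It HP) (rlim_const P (- f i t) t)).
    + clear. induction n; simpl; auto. rewrite IHn0, Rminus_diag, Rabs_R0. ring.
Qed.

Section GD.
Variables (y : R) (xi : Hs) (Iy : I y) (Dxi : D xi).
Definition chi r := U r y xi.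
Definition GG r := Re (inner (chi r) (vv r)).
Definition ct t := rsum n (fun i => fp i t * Re (inner (Hop i (chi t)) (phi t))).

Lemma GD a b S : s <= a -> b <= T -> (forall r, a <= r <= b -> MM r <= S) ->
  forall t, a <= t <= b ->
  rlim (fun r => a <= r <= b) (fun r => (GG r - GG t) / (r - t)) t (ct t).
Proof.
  intros Ha Hb HS t Ht.
  set (P := fun r => a <= r <= b).
  assert (HPI : forall r, P r -> I r). { intros r Pr. apply J_I. unfold P in Pr. lra. }
  assert (It : I t) by (apply HPI; exact Ht).
  assert (Dchi : forall r, I r -> D (chi r)). { intros. apply U_D; auto. }
  assert (Dphi : forall r, I r -> D (phi r)). { intros. apply U_D; auto. }
  set (Dchi_q := fun r => vscal (Cof (/ (r - t))) (vsub (chi r) (chi t))).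
  set (Dphi_q := fun r => vscal (Cof (/ (r - t))) (vsub (phi r) (phi t))).
  set (A := fun r => Re (inner (Dchi_q r) (vv r))).
  set (B1 := fun r => rsum n (fun i => ((f i r - f i t) / (r - t)) * Re (inner (Hop i (chi t)) (phi r)))).
  set (B2 := fun r => Re (inner (Hf t (chi t)) (Dphi_q r))).
  assert (Hid : forall r, P r -> r <> t -> (GG r - GG t) / (r - t) = A r + B1 r + B2 r).
  { intros r Pr Hr. assert (Ir : I r) by auto.
    assert (E1 : Re (inner (chi t) (vv r)) = rsum n (fun i => f i r * Re (inner (Hop i (chi t)) (phi r)))).
    { unfold vv. rewrite <- Hf_sym; auto. unfold Hf. apply Re_inner_Hsum_l. }
    assert (E2 : Re (inner (chi t) (vv t)) = rsum n (fun i => f i t * Re (inner (Hop i (chi t)) (phi r))) - (r - t) * B2 r).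
    { unfold vv. rewrite <- Hf_sym; auto. unfold B2, Dphi_q. rewrite Re_inner_scalR_r, Re_inner_sub_r.
      unfold Hf at 2. rewrite Re_inner_Hsum_l. fold (Hf t (chi t)). field. lra. }
    assert (E3 : A r = / (r - t) * (GG r - Re (inner (chi t) (vv r)))).
    { unfold A, Dchi_q, GG. rewrite Re_inner_scalR_l, Re_inner_sub_l. reflexivity. }
    assert (E4 : B1 r = / (r - t) * (rsum n (fun i => f i r * Re (inner (Hop i (chi t)) (phi r))) -
                                    rsum n (fun i => f i t * Re (inner (Hop i (chi t)) (phi r))))).
    { unfold B1. rewrite <- rsum_minus, <- rsum_scal. apply rsum_ext. intros. unfold Rdiv. ring. }
    assert (EG : GG t = Re (inner (chi t) (vv t))) by reflexivity.
    rewrite E3, E4, EG, E2, <- E1. field. lra. }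
  assert (Hchi' := deriv_vlim I P chi t _ HPI (U_deriv t y xi It Iy Dxi)).
  assert (Hphi' := deriv_vlim I P phi t _ HPI (U_deriv t s Psi It Is HPsi)).
  fold (chi t) in Hchi'. fold (phi t) in Hphi'.
  assert (Hphic : vlim P phi t (phi t)) by (eapply deriv_cont; apply Hphi').
  assert (HvS : forall r, P r -> r <> t -> Rabs (r - t) < 1 -> vnorm (vv r) <= S).
  { intros r Pr _ _. apply HS. exact Pr. }
  assert (Hweak : forall z, rlim P (fun r => Re (inner z (vv r))) t (Re (inner z (vv t)))).
  { apply (weak_dense P vv t (vv t) S 1 D D_dense); auto. lra.
    intros z Dz. apply rlim_ext with (F := fun r => Re (inner (Hf r z) (phi r))).
    - intros r Pr _. unfold vv. rewrite Hf_sym; auto.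
    - unfold vv. rewrite <- Hf_sym; auto. apply rlim_Re_inner_strong; auto. apply Hf_cont; auto. }
  assert (LA : rlim P A t (Re (inner (vscal (mkC 0 (-1)) (Hf t (chi t))) (vv t)))).
  { apply (rlim_Re_inner_weak P Dchi_q vv t _ _ S 1); auto. lra. }
  assert (LB2 : rlim P B2 t (Re (inner (Hf t (chi t)) (vscal (mkC 0 (-1)) (Hf t (phi t)))))).
  { apply rlim_Re_inner_strong; auto. apply vlim_const. }
  assert (LB1 : rlim P B1 t (ct t)).
  { apply rlim_rsum. intros i Hin. apply rlim_mult.
    - apply (deriv_rlim I); auto.
    - apply rlim_Re_inner_strong; auto. apply vlim_const. }
  apply rlim_ext with (F := fun r => A r + B1 r + B2 r).
  { intros r Pr Hr. symmetry. apply Hid; auto. }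
  replace (ct t) with (Re (inner (vscal (mkC 0 (-1)) (Hf t (chi t))) (vv t)) + ct t +
                       Re (inner (Hf t (chi t)) (vscal (mkC 0 (-1)) (Hf t (phi t))))).
  - apply rlim_plus; [apply rlim_plus|]; auto.
  - rewrite Re_inner_scal_l, Re_inner_scal_r. unfold vv. simpl. ring.
Qed.

End GD.

Context (K : nat -> R)
  (HK : forall i, (i < n)%nat -> 0 < K i /\ forall x t, D x -> I t -> vnorm (Hop i x) <= K i * (vnorm (Hf t x) + vnorm x)).
Context (C1 : R) (HC1pos : 0 <= C1) (HC1 : forall t, s <= t <= T -> rsum n (fun i => Rabs (fp i t) * K i) <= C1).

Lemma ct_bound y xi t : I y -> D xi -> s <= t <= T ->
  Rabs (ct y xi t) <= vnorm xi * (MM t + vnorm Psi) * C1.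
Proof.
  intros Iy Dxi Ht. assert (It : I t) by (apply J_I; auto).
  unfold ct. eapply Rle_trans. apply rsum_abs.
  apply Rle_trans with (rsum n (fun i => vnorm xi * (MM t + vnorm Psi) * (Rabs (fp i t) * K i))).
  - apply rsum_le. intros i Hin. rewrite Rabs_mult.
    rewrite Hop_sym; auto; [|apply U_D; auto| apply U_D; auto].
    pose proof (cauchy_schwarz_abs (chi y xi t) (Hop i (phi t))).
    destruct (HK i Hin) as [HKp HKb]. specialize (HKb (phi t) t (U_D t s Psi It Is HPsi) It).
    unfold chi in H at 2. rewrite U_norm in H; auto.
    fold (Hf t (phi t)) in HKb. fold (vv t) (MM t) in HKb. rewrite phi_norm in HKb; auto.
    pose proof (Rabs_pos (fp i t)). pose proof (vnorm_ge0 xi). pose proof (vnorm_ge0 (Hop i (phi t))).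
    assert (Rabs (Re (inner (chi y xi t) (Hop i (phi t)))) <= vnorm xi * (K i * (MM t + vnorm Psi))).
    { eapply Rle_trans. apply H. apply Rmult_le_compat_l; auto. }
    apply Rle_trans with (Rabs (fp i t) * (vnorm xi * (K i * (MM t + vnorm Psi)))).
    apply Rmult_le_compat_l; auto. right; ring.
  - rewrite rsum_scal. apply Rmult_le_compat_l; auto.
    apply Rmult_le_pos. apply vnorm_ge0. pose proof (vnorm_ge0 Psi). unfold MM. pose proof (vnorm_ge0 (vv t)). lra.
Qed.

Lemma G_incr y xi a b S : I y -> D xi -> s <= a -> a <= b -> b <= T -> (forall r, a <= r <= b -> MM r <= S) ->
  Rabs (GG y xi b - GG y xi a) <= vnorm xi * (S + vnorm Psi) * C1 * (b - a).
Proof.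
  intros Iy Dxi Ha Hab Hb HS.
  apply (rlim_to_mvt_abs _ (ct y xi)); auto.
  - intros t Ht. apply (GD y xi Iy Dxi a b S); auto.
  - intros t Ht. eapply Rle_trans. apply ct_bound; auto. lra.
    apply Rmult_le_compat_r; auto. apply Rmult_le_compat_l. apply vnorm_ge0.
    apply Rplus_le_compat_r. apply HS; auto.
Qed.

Lemma Kstep a b S x y : s <= a -> a <= b -> b <= T -> (forall r, a <= r <= b -> MM r <= S) ->
  a <= x <= b -> a <= y <= b -> MM y <= MM x + C1 * (S + vnorm Psi) * Rabs (y - x).
Proof.
  intros Ha Hab Hb HS Hx Hy.
  assert (Iy : I y) by (apply J_I; lra). assert (Ix : I x) by (apply J_I; lra).
  assert (HS0 : 0 <= S). { eapply Rle_trans; [|apply (HS x Hx)]. apply vnorm_ge0. }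
  apply (dense_norm_bound D). apply D_dense.
  { apply Rplus_le_le_0_compat. apply vnorm_ge0. apply Rmult_le_pos. apply Rmult_le_pos; auto.
    pose proof (vnorm_ge0 Psi); lra. apply Rabs_pos. }
  intros z Dz.
  assert (Hinc : Rabs (GG y z y - GG y z x) <= vnorm z * (S + vnorm Psi) * C1 * Rabs (y - x)).
  { destruct (Rle_or_lt x y).
    - rewrite (Rabs_right (y - x)) by lra. apply G_incr; auto; try lra. intros r Hr; apply HS; lra.
    - rewrite (Rabs_left (y - x)) by lra. rewrite <- Rabs_Ropp. replace (- (GG y z y - GG y z x)) with (GG y z x - GG y z y) by ring.
      replace (- (y - x)) with (x - y) by ring. apply G_incr; auto; try lra. intros r Hr; apply HS; lra. }
  assert (HGy : GG y z y = Re (inner z (vv y))). { unfold GG, chi. rewrite U_id; auto. }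
  assert (HGx : GG y z x <= vnorm z * MM x).
  { unfold GG. eapply Rle_trans. apply cauchy_schwarz. unfold chi. rewrite U_norm; auto. right; reflexivity. }
  apply Rabs_le_inv in Hinc. rewrite <- HGy. 
  pose proof (vnorm_ge0 z).
  assert (E : vnorm z * (MM x + C1 * (S + vnorm Psi) * Rabs (y - x)) = vnorm z * MM x + vnorm z * (S + vnorm Psi) * C1 * Rabs (y - x)) by ring.
  rewrite E. lra.
Qed.

Lemma halving (m : R -> R) (Z : R -> Prop) c :
  (forall S', (forall r, Z r -> m r <= S') -> forall r, Z r -> m r <= c + S' / 2) ->
  (exists S, forall r, Z r -> m r <= S) -> forall r, Z r -> m r <= 2 * c.
Proof.
  intros H [S HS].
  assert (Hk : forall k, forall r, Z r -> m r <= 2 * c + (S - 2 * c) / 2 ^ k).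
  { induction k; intros r Zr. simpl. replace ((S - 2 * c) / 1) with (S - 2 * c) by field. specialize (HS r Zr). lra.
    specialize (H _ IHk r Zr). simpl. replace (2 * c + (S - 2 * c) / (2 * 2 ^ k)) with
      (c + (2 * c + (S - 2 * c) / 2 ^ k) / 2). auto. field. apply pow_nonzero. lra. }
  intros r Zr. apply Rnot_lt_le. intro Hc.
  assert (Hpos : 0 < m r - 2 * c) by lra.
  assert (Hg : 0 < S - 2 * c). { specialize (Hk 0%nat r Zr). simpl in Hk. unfold Rdiv in Hk. rewrite Rinv_1 in Hk. lra. }
  destruct (archimed ((S - 2 * c) / (m r - 2 * c))) as [Har _].
  set (k := Z.to_nat (up ((S - 2 * c) / (m r - 2 * c)))).
  assert (Hkr : (S - 2 * c) / (m r - 2 * c) < INR k).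
  { unfold k. rewrite INR_IZR_INZ, Z2Nat.id. auto. apply le_IZR. 
    assert (0 < (S - 2 * c) / (m r - 2 * c)) by (apply Rdiv_lt_0_compat; auto). lra. }
  assert (Hpow : forall k, INR k < 2 ^ k).
  { induction k0. simpl. lra. rewrite S_INR. simpl. assert (1 <= 2 ^ k0) by (apply pow_R1_Rle; lra). lra. }
  specialize (Hk k r Zr). specialize (Hpow k).
  assert (H2k : 0 < 2 ^ k) by (apply pow_lt; lra).
  assert ((S - 2 * c) / 2 ^ k < m r - 2 * c).
  { apply Rmult_lt_reg_r with (2 ^ k); auto. unfold Rdiv. rewrite Rmult_assoc, Rinv_l by lra.
    apply Rmult_lt_reg_r with (/ (m r - 2 * c)). apply Rinv_0_lt_compat; auto.
    replace ((m r - 2 * c) * 2 ^ k * / (m r - 2 * c)) with (2 ^ k) by (field; lra).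
    unfold Rdiv in Hkr. lra. }
  lra.
Qed.

Definition ell0 := / (2 * (C1 + 1)).

Lemma ell0_pos : 0 < ell0.
Proof. unfold ell0. apply Rinv_0_lt_compat. lra. Qed.

Lemma ell0_C1 : C1 * ell0 <= / 2.
Proof. unfold ell0. apply Rmult_le_reg_r with (2 * (C1 + 1)). lra.
  rewrite Rmult_assoc, Rinv_l by lra. field_simplify; lra. Qed.

Lemma Kint a b x : s <= a -> a <= b -> b <= T -> b - a <= ell0 ->
  (exists S, forall r, a <= r <= b -> MM r <= S) -> a <= x <= b ->
  forall y, a <= y <= b -> MM y <= 2 * MM x + vnorm Psi.
Proof.
  intros Ha Hab Hb Hl HS Hx.
  replace (2 * MM x + vnorm Psi) with (2 * (MM x + vnorm Psi / 2)) by field.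
  apply (halving MM (fun r => a <= r <= b)); auto.
  intros S' HS' r Hr.
  pose proof (Kstep a b S' x r Ha Hab Hb HS' Hx Hr).
  assert (HS0 : 0 <= S'). { eapply Rle_trans; [|apply (HS' x Hx)]. apply vnorm_ge0. }
  assert (Rabs (r - x) <= ell0) by (apply Rabs_le; split; lra).
  pose proof ell0_C1. pose proof (vnorm_ge0 Psi).
  assert (C1 * (S' + vnorm Psi) * Rabs (r - x) <= (S' + vnorm Psi) / 2).
  { apply Rle_trans with ((S' + vnorm Psi) * (C1 * ell0)).
    rewrite (Rmult_comm C1), Rmult_assoc. apply Rmult_le_compat_l. lra. apply Rmult_le_compat_l; auto.
    apply Rle_trans with ((S' + vnorm Psi) * / 2). apply Rmult_le_compat_l; lra. right; field. }
  lra.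
Qed.

Definition locb t := exists rho S, 0 < rho /\ forall r, s <= r <= T -> Rabs (r - t) < rho -> MM r <= S.
Definition Bad t := s <= t <= T /\ ~ locb t.

Lemma L0 a b : s <= a -> a < b -> b <= T -> b - a <= ell0 ->
  (forall r, a < r < b -> locb r) -> exists S, forall r, a <= r <= b -> MM r <= S.
Proof.
  intros Ha Hab Hb Hl HL. set (m := (a + b) / 2).
  assert (Hin : forall r, a < r < b -> MM r <= 2 * MM m + vnorm Psi).
  { intros r Hr. set (lo := Rmin r m). set (hi := Rmax r m).
    assert (Hlo : a < lo) by (unfold lo, m; apply Rmin_glb_lt; lra).
    assert (Hhi : hi < b) by (unfold hi, m; apply Rmax_lub_lt; lra).
    assert (Hlh : lo <= hi) by (unfold lo, hi; eapply Rle_trans; [apply Rmin_r|apply Rmax_r]).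
    assert (Hbd : exists S, forall w, lo <= w <= hi -> MM w <= S).
    { apply loc_bounded_compact; auto. intros t Ht. destruct (HL t ltac:(lra)) as [rho [S [Hrho HS]]].
      exists rho, S. split; auto. intros w Hw Hwt. apply HS; auto. lra. }
    assert (Hm1 : lo <= m <= hi). { split. unfold lo; apply Rmin_r. unfold hi; apply Rmax_r. }
    assert (Hr1 : lo <= r <= hi). { split. unfold lo; apply Rmin_l. unfold hi; apply Rmax_l. }
    apply (Kint lo hi m); auto; lra. }
  exists (Rmax (2 * MM m + vnorm Psi) (Rmax (MM a) (MM b))). intros r Hr.
  destruct (Req_dec r a) as [->|Ha']. eapply Rle_trans; [|apply Rmax_r]. apply Rmax_l.
  destruct (Req_dec r b) as [->|Hb']. eapply Rle_trans; [|apply Rmax_r]. apply Rmax_r.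
  eapply Rle_trans; [|apply Rmax_l]. apply Hin. lra.
Qed.

Lemma L0_K a b : s <= a -> a < b -> b <= T -> b - a <= ell0 ->
  (forall r, a < r < b -> locb r) -> MM b <= 2 * MM a + vnorm Psi /\ MM a <= 2 * MM b + vnorm Psi.
Proof.
  intros. pose proof (L0 a b H H0 H1 H2 H3). split.
  - apply (Kint a b a); auto; lra.
  - apply (Kint a b b); auto; lra.
Qed.

Lemma Bad_closed x : s <= x <= T -> (forall eps, 0 < eps -> exists y, Bad y /\ Rabs (y - x) < eps) -> Bad x.
Proof.
  intros Hx H. split; auto. intros [rho [S [Hrho HS]]].
  destruct (H (rho / 2) ltac:(lra)) as [y [[Hy Hny] Hyx]]. apply Hny.
  exists (rho / 2), S. split. lra. intros r Hr Hry. apply HS; auto.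
  apply Rabs_def2 in Hyx. apply Rabs_def2 in Hry. apply Rabs_def1; lra.
Qed.

Lemma MM_lsc x N : s <= x <= T -> (forall eps, 0 < eps -> exists y, (s <= y <= T /\ MM y <= N) /\ Rabs (y - x) < eps) -> MM x <= N.
Proof.
  intros Hx H.
  assert (HN : 0 <= N). { destruct (H 1 Rlt_0_1) as [y [[_ Hy] _]]. eapply Rle_trans; [|apply Hy]. apply vnorm_ge0. }
  apply (dense_norm_bound D); auto. apply D_dense. intros z Dz.
  apply Rnot_lt_le. intro Hc.
  set (P := fun r => s <= r <= T).
  assert (HPI : forall r, P r -> I r) by (intros; apply J_I; auto).
  assert (Ix : I x) by (apply J_I; auto).
  assert (Hl : rlim P (fun r => Re (inner (Hf r z) (phi r))) x (Re (inner (Hf x z) (phi x)))).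
  { apply rlim_Re_inner_strong. apply Hf_cont; auto.
    eapply deriv_cont. apply (deriv_vlim I P phi x _ HPI (U_deriv x s Psi Ix Is HPsi)). }
  assert (Hxx : Re (inner (Hf x z) (phi x)) = Re (inner z (vv x))). { unfold vv. rewrite Hf_sym; auto. apply U_D; auto. }
  rewrite Hxx in Hl.
  destruct (Hl (Re (inner z (vv x)) - vnorm z * N) ltac:(lra)) as [d [Hd Hd']].
  destruct (H d Hd) as [y [[Hy HMy] Hyx]].
  assert (Iy : I y) by (apply J_I; auto).
  assert (Hle : Re (inner z (vv y)) <= vnorm z * N).
  { eapply Rle_trans. apply cauchy_schwarz. apply Rmult_le_compat_l. apply vnorm_ge0. auto. }
  destruct (Req_dec y x) as [->|Hne]. lra.
  specialize (Hd' y Hy Hne Hyx). rewrite Hf_sym in Hd'; auto; [|apply U_D; auto].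
  fold (vv y) in Hd'. apply Rabs_def2 in Hd'. lra.
Qed.

Lemma no_bad : forall t, s <= t <= T -> locb t.
Proof.
  intros t0 Ht0. apply NNPP. intro Hnb.
  assert (Hex : exists x, Bad x) by (exists t0; split; auto).
  destruct (baire Bad (fun N t => s <= t <= T /\ MM t <= INR N) s T) as [N [p [q [Hpq [[x0 [Bx0 Hx0]] HE]]]]].
  - intros x [Hx _]; auto.
  - apply Bad_closed.
  - intros N x Hx H. split; auto. apply MM_lsc; auto.
  - intros x [Hx _]. destruct (archimed (MM x)) as [Har _]. exists (Z.to_nat (up (MM x))). split; auto.
    rewrite INR_IZR_INZ, Z2Nat.id. lra. apply le_IZR. pose proof (vnorm_ge0 (vv x)). unfold MM in *. lra.
  - auto.
  - set (p' := Rmax p (x0 - ell0 / 2)). set (q' := Rmin q (x0 + ell0 / 2)).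
    pose proof ell0_pos as Hell.
    assert (Hp'1 : p <= p') by apply Rmax_l. assert (Hp'2 : x0 - ell0 / 2 <= p') by apply Rmax_r.
    assert (Hq'1 : q' <= q) by apply Rmin_l. assert (Hq'2 : q' <= x0 + ell0 / 2) by apply Rmin_r.
    assert (Hp'3 : p' < x0) by (unfold p'; apply Rmax_lub_lt; lra).
    assert (Hq'3 : x0 < q') by (unfold q'; apply Rmin_glb_lt; lra).
    destruct Bx0 as [Hx0J Hnl]. apply Hnl.
    exists (Rmin (x0 - p') (q' - x0)), (2 * INR N + vnorm Psi). split. apply Rmin_pos; lra.
    intros r Hr Hrx. apply Rabs_def2 in Hrx. destruct Hrx as [Hrx1 Hrx2].
    pose proof (Rmin_l (x0 - p') (q' - x0)). pose proof (Rmin_r (x0 - p') (q' - x0)).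
    assert (HNpos : 0 <= INR N) by apply pos_INR. pose proof (vnorm_ge0 Psi).
    assert (HBadE : forall w, Bad w -> p' < w < q' -> MM w <= INR N).
    { intros w Bw Hw. apply (HE w Bw). lra. }
    destruct (classic (Bad r)) as [Br|Br].
    { specialize (HBadE r Br ltac:(lra)). lra. }
    assert (Hlr : locb r). { apply NNPP. intro. apply Br. split; auto. }
    destruct (Rle_or_lt r x0) as [Hrx0|Hrx0].
    + destruct (Req_dec r x0) as [->|Hne]. { exfalso. apply Br. split; auto. }
      (* inf of bad points in [r, x0] *)
      set (S := fun u => Bad (- u) /\ r <= - u <= x0).
      assert (HS0 : S (- x0)). { unfold S. rewrite Ropp_involutive. split. split; auto. lra. }
      assert (HSb : bound S). { exists (- r). intros u [_ Hu]. lra. }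
      destruct (completeness S HSb (ex_intro _ _ HS0)) as [u Hu].
      set (a := - u).
      assert (Hau : u >= - x0) by (apply Rle_ge; apply Hu; auto).
      assert (Hau2 : u <= - r). { apply Hu. intros w [_ Hw]. lra. }
      assert (Ba : Bad a).
      { apply Bad_closed. unfold a. lra. intros e He. destruct (lub_approx S u e Hu He) as [w [[Bw Hw] [Hw1 Hw2]]].
        exists (- w). split; auto. unfold a. apply Rabs_def1; lra. }
      assert (Hra : r < a). { assert (r <= a) by (unfold a; lra). destruct (Rle_lt_or_eq_dec r a ltac:(assumption)) as [E|E]. auto. rewrite E in Br. contradiction. }
      assert (Hfree : forall w, r < w < a -> locb w).
      { intros w Hw. apply NNPP. intro Hnw. assert (S (- w)). { unfold S. rewrite Ropp_involutive. split. split. unfold a in Hw; lra. auto. unfold a in Hw; lra. }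
        assert (- w <= u) by (apply Hu; auto). unfold a in Hw. lra. }
      assert (Hra2 : a - r <= ell0) by (unfold a in *; lra).
      assert (Has : s <= r) by lra. assert (HaT : a <= T) by (unfold a in *; lra).
      destruct (L0_K r a Has Hra HaT Hra2 Hfree) as [_ H3].
      assert (HMa : MM a <= INR N) by (apply HBadE; auto; unfold a in *; lra).
      lra.
    + set (S := fun w => Bad w /\ x0 <= w <= r).
      assert (HS0 : S x0). { unfold S. split. split; auto. lra. }
      assert (HSb : bound S). { exists r. intros w [_ Hw]. lra. }
      destruct (completeness S HSb (ex_intro _ _ HS0)) as [a Ha].
      assert (Ha1 : x0 <= a) by (apply Ha; auto).
      assert (Ha2 : a <= r). { apply Ha. intros w [_ Hw]. lra. }
      assert (Ba : Bad a).
      { apply Bad_closed. lra. intros e He. destruct (lub_approx S a e Ha He) as [w [[Bw Hw] [Hw1 Hw2]]].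
        exists w. split; auto. apply Rabs_def1; lra. }
      assert (Hra : a < r). { destruct (Rle_lt_or_eq_dec a r Ha2) as [E|E]. auto. rewrite <- E in Br. contradiction. }
      assert (Hfree : forall w, a < w < r -> locb w).
      { intros w Hw. apply NNPP. intro Hnw. assert (S w). { unfold S. split. split. lra. auto. lra. }
        assert (w <= a) by (apply Ha; auto). lra. }
      assert (Hra2 : r - a <= ell0) by lra.
      assert (Has : s <= a) by lra. assert (HaT : r <= T) by lra.
      destruct (L0_K a r Has Hra HaT Hra2 Hfree) as [H3 _].
      assert (HMa : MM a <= INR N) by (apply HBadE; auto; lra).
      lra.
Qed.

Lemma MM_bounded : exists Mb, forall t, s <= t <= T -> MM t <= Mb.
Proof.
  apply loc_bounded_compact. lra. intros t Ht. destruct (no_bad t Ht) as [rho [S [Hrho HS]]].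
  exists rho, S. auto.
Qed.

End Core.


Section Fin.
Context {Hs : HilbertSpace}.

Lemma vscal_sub a (x y : Hs) : vscal a (vsub x y) = vsub (vscal a x) (vscal a y).
Proof. unfold vsub. rewrite vscal_distr_v, vscal_opp. reflexivity. Qed.

Lemma vsub_sub4 (a b c d : Hs) : vsub (vsub a b) (vsub c d) = vsub (vsub a c) (vsub b d).
Proof.
  unfold vsub. rewrite !vopp_add, !vopp_opp. rewrite <- !vadd_assoc. f_equal.
  rewrite !vadd_assoc. f_equal. apply vadd_comm.
Qed.

Lemma vlim_sub P (F G : R -> Hs) t a b : vlim P F t a -> vlim P G t b -> vlim P (fun r => vsub (F r) (G r)) t (vsub a b).
Proof.
  intros HF HG e He. destruct (HF (e/2)) as [d1 [Hd1 H1]]. lra. destruct (HG (e/2)) as [d2 [Hd2 H2]]. lra.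
  exists (Rmin d1 d2). split. apply Rmin_pos; auto. intros r Pr Hr Hd.
  specialize (H1 r Pr Hr (Rlt_le_trans _ _ _ Hd (Rmin_l _ _))).
  specialize (H2 r Pr Hr (Rlt_le_trans _ _ _ Hd (Rmin_r _ _))).
  rewrite vsub_sub4. eapply Rle_lt_trans. apply vnorm_sub_le. lra.
Qed.

Lemma nsq_deriv P (F : R -> Hs) t v :
  vlim P (fun r => vscal (Cof (/ (r - t))) (vsub (F r) (F t))) t v ->
  rlim P (fun r => (nsq (F r) - nsq (F t)) / (r - t)) t (2 * Re (inner (F t) v)).
Proof.
  intro H. pose proof (deriv_cont P F t v H) as Hc.
  eapply rlim_ext with (F := fun r => Re (inner (vscal (Cof (/ (r - t))) (vsub (F r) (F t))) (F r)) +
                                       Re (inner (F t) (vscal (Cof (/ (r - t))) (vsub (F r) (F t))))).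
  - intros r _ Hr. rewrite Re_inner_scalR_l, Re_inner_scalR_r, Re_inner_sub_l, Re_inner_sub_r.
    unfold nsq. rewrite (Re_inner_sym (F t) (F r)). field. lra.
  - replace (2 * Re (inner (F t) v)) with (Re (inner v (F t)) + Re (inner (F t) v)) by (rewrite Re_inner_sym; ring).
    apply rlim_plus; apply rlim_Re_inner_strong; auto. apply vlim_const.
Qed.

Lemma Im_bound (x y : Hs) : Rabs (Im (inner x y)) <= vnorm x * vnorm y.
Proof.
  replace (Im (inner x y)) with (Re (inner x (vscal (mkC 0 (-1)) y))).
  - assert (Hn : vnorm (vscal (mkC 0 (-1)) y) = vnorm y).
    { rewrite vnorm_scal_i. replace (Rabs (-1)) with 1. ring. rewrite Rabs_left; lra. }
    rewrite <- Hn. apply cauchy_schwarz_abs.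
  - rewrite Re_inner_scal_r. simpl. ring.
Qed.

End Fin.

Lemma choice_fun {A : Type} (a0 : A) (n : nat) (P : nat -> A -> Prop) :
  (forall i, (i < n)%nat -> exists x, P i x) -> exists F : nat -> A, forall i, (i < n)%nat -> P i (F i).
Proof.
  intros H. exists (fun i => epsilon (inhabits a0) (fun x => (i < n)%nat -> P i x)).
  intros i Hi. apply (epsilon_spec (inhabits a0) (fun x => (i < n)%nat -> P i x)); auto.
  destruct (H i Hi) as [x Hx]. exists x. auto.
Qed.

Lemma rsum_locb s T n (F : nat -> R -> R) t :
  (forall i, (i < n)%nat -> exists rho S, 0 < rho /\ forall r, s <= r <= T -> Rabs (r - t) < rho -> F i r <= S) ->
  exists rho S, 0 < rho /\ forall r, s <= r <= T -> Rabs (r - t) < rho -> rsum n (fun i => F i r) <= S.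
Proof.
  induction n; intros H.
  - exists 1, 0. split. lra. intros. simpl. lra.
  - destruct IHn as [rho1 [S1 [H1 H1']]]. intros i Hi; apply H; lia.
    destruct (H n ltac:(lia)) as [rho2 [S2 [H2 H2']]].
    exists (Rmin rho1 rho2), (S1 + S2). split. apply Rmin_pos; auto. intros r Hr Hrt. simpl.
    pose proof (H1' r Hr (Rlt_le_trans _ _ _ Hrt (Rmin_l _ _))).
    pose proof (H2' r Hr (Rlt_le_trans _ _ _ Hrt (Rmin_r _ _))). lra.
Qed.


Lemma vlim_ext {Hs : HilbertSpace} P (F G : R -> Hs) t v : (forall r, F r = G r) -> vlim P F t v -> vlim P G t v.
Proof. intros E H e He. destruct (H e He) as [d [Hd H']]. exists d; split; auto. intros. rewrite <- E. auto. Qed.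

Lemma Im_inner_sub_r {Hs : HilbertSpace} (x y z : Hs) : Im (inner x (vsub y z)) = Im (inner x y) - Im (inner x z).
Proof. unfold vsub. rewrite Im_inner_add_r, Im_inner_opp_r. ring. Qed.

Theorem theorem2 (Hs : HilbertSpace) (n : nat) (Hop : nat -> Hs -> Hs)
  (D : Hs -> Prop) (I : R -> Prop) (f : nat -> R -> R)
  (U1 : R -> R -> Hs -> Hs) :
  (forall i, (i < n)%nat -> symmetric_op Hs D (Hop i)) ->
  is_interval I ->
  hyp_i Hs I D n f Hop ->
  (forall i, (i < n)%nat -> C1_on I (f i)) ->
  hyp_iii Hs I D n f Hop ->
  propagator_of Hs I D n f Hop U1 ->
  forall (Psi : Hs) (s T eps : R),
    D Psi -> I s -> I T -> s < T -> 0 < eps ->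
    exists delta, 0 < delta /\
      forall (g : nat -> R -> R) (U2 : R -> R -> Hs -> Hs),
        hyp_i Hs I D n g Hop ->
        (forall i, (i < n)%nat -> C1_on I (g i)) ->
        hyp_iii Hs I D n g Hop ->
        propagator_of Hs I D n g Hop U2 ->
        sup_close I n f g delta ->
        vnorm (vsub (U1 T s Psi) (U2 T s Psi)) < eps.
Proof.
  intros Hsym HI Hi1 HC1f Hiii1 HU1 Psi s T eps HPsi Is IT HsT Heps.
  assert (HJ : forall r, s <= r <= T -> I r). { intros r [H1 H2]. apply (HI s r T); auto. }
  destruct (choice_fun (fun _ : R => 0) n (fun i fp' =>
     (forall t, I t -> forall eps, 0 < eps -> exists d, 0 < d /\
       forall h, h <> 0 -> I (t + h) -> Rabs h < d ->
         Rabs ((f i (t + h) - f i t) / h - fp' t) < eps) /\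
     (forall t, I t -> forall eps, 0 < eps -> exists d, 0 < d /\
       forall u, I u -> Rabs (u - t) < d -> Rabs (fp' u - fp' t) < eps)) HC1f) as [fp Hfp].
  destruct (choice_fun 0 n (fun i k => 0 < k /\ forall x t, D x -> I t ->
      vnorm (Hop i x) <= k * (vnorm (Hf Hs n Hop f t x) + vnorm x)) Hiii1) as [K HK].
  assert (HKpos : forall i, (i < n)%nat -> 0 < K i) by (intros i Hin; apply (HK i Hin)).
  destruct (loc_bounded_compact (fun t => rsum n (fun i => Rabs (fp i t) * K i)) s T ltac:(lra)) as [C HC].
  { intros t Ht. apply rsum_locb. intros i Hin.
    destruct (proj2 (Hfp i Hin) t (HJ t Ht) 1 Rlt_0_1) as [d [Hd Hd']].
    exists d, ((Rabs (fp i t) + 1) * K i). split; auto. intros r Hr Hrt.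
    specialize (Hd' r (HJ r Hr) Hrt). apply Rmult_le_compat_r. left; auto.
    pose proof (Rabs_triang_inv (fp i r) (fp i t)). lra. }
  set (C1 := Rmax C 0).
  assert (HC1 : forall t, s <= t <= T -> rsum n (fun i => Rabs (fp i t) * K i) <= C1).
  { intros t Ht. eapply Rle_trans. apply HC; auto. apply Rmax_l. }
  destruct (MM_bounded Hs n Hop D I f U1 Hsym HI Hi1 HU1 fp (fun i Hin => proj1 (Hfp i Hin))
             Psi s T HPsi Is IT HsT K HK C1 (Rmax_r C 0) HC1) as [Mb HMb].
  set (Mb' := Rmax Mb 0).
  set (KS := rsum n K).
  assert (HKS : 0 <= KS). { apply rsum_nonneg. intros. left; auto. }
  pose proof (vnorm_ge0 Psi) as HPsi0.
  assert (HMb' : 0 <= Mb') by apply Rmax_r.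
  set (A := 4 * vnorm Psi * KS * (Mb' + vnorm Psi)).
  assert (HA : 0 <= A). { unfold A. apply Rmult_le_pos. apply Rmult_le_pos. lra. auto. lra. }
  exists (eps * eps / (A * (T - s) + 1)). split.
  { apply Rdiv_lt_0_compat. nra. nra. }
  intros g U2 Hi2 HC1g Hiii2 HU2 [c [Hcd Hc]].
  set (c' := Rmax c 0).
  set (phi1 := fun t => U1 t s Psi). set (phi2 := fun t => U2 t s Psi).
  set (dd := fun t => vsub (phi1 t) (phi2 t)).
  set (mi := mkC 0 (-1)).
  set (d1 := fun t => vscal mi (Hf Hs n Hop f t (phi1 t))).
  set (d2 := fun t => vscal mi (Hf Hs n Hop g t (phi2 t))).
  set (P := fun r => s <= r <= T).
  assert (Hderiv : forall t, P t -> rlim P (fun r => (nsq (dd r) - nsq (dd t)) / (r - t)) t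
                                  (2 * Re (inner (dd t) (vsub (d1 t) (d2 t))))).
  { intros t Ht. apply nsq_deriv.
    apply vlim_ext with (F := fun r => vsub (vscal (Cof (/ (r - t))) (vsub (phi1 r) (phi1 t)))
                                         (vscal (Cof (/ (r - t))) (vsub (phi2 r) (phi2 t)))).
    { intro r. unfold dd. rewrite (vsub_sub4 (phi1 r) (phi2 r)). symmetry. apply vscal_sub. }
    apply vlim_sub.
    - apply (deriv_vlim I P (fun r => U1 r s Psi) t); auto. apply (U_deriv Hs n Hop D I f U1 HU1); auto.
    - apply (deriv_vlim I P (fun r => U2 r s Psi) t); auto. apply (U_deriv Hs n Hop D I g U2 HU2); auto. }
  assert (Hbound : forall t, P t -> 2 * Re (inner (dd t) (vsub (d1 t) (d2 t))) <= c' * A).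
  { intros t Ht. assert (It : I t) by (apply HJ; auto).
    assert (D1 : D (phi1 t)) by (apply (U_D Hs n Hop D I f U1 HU1); auto).
    assert (D2 : D (phi2 t)) by (apply (U_D Hs n Hop D I g U2 HU2); auto).
    assert (Ddd : D (dd t)).
    { destruct (Hi2 t It) as [[[_ [Hadd Hsc]] _] _]. unfold dd, vsub. apply Hadd; auto.
      rewrite vopp_scal. apply Hsc; auto. }
    assert (Hlin : Hf Hs n Hop g t (dd t) = vadd (vscal (Cof (-1)) (Hf Hs n Hop g t (phi2 t))) (Hf Hs n Hop g t (phi1 t))).
    { destruct (Hi2 t It) as [[_ [_ [Hl _]]] _]. unfold dd, vsub. rewrite vadd_comm, vopp_scal. apply Hl; auto. }
    assert (Hsymd : Im (inner (dd t) (Hf Hs n Hop g t (dd t))) = 0).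
    { pose proof (Im_inner_sym (dd t) (Hf Hs n Hop g t (dd t))).
      rewrite (Hf_sym Hs n Hop D I g Hi2 t (dd t) (dd t)) in H; auto. lra. }
    rewrite Hlin, Im_inner_add_r, Im_inner_scal_r in Hsymd. simpl in Hsymd.
    assert (E : Re (inner (dd t) (vsub (d1 t) (d2 t))) =
               Im (inner (dd t) (vsub (Hf Hs n Hop f t (phi1 t)) (Hf Hs n Hop g t (phi1 t))))).
    { unfold d1, d2, mi. rewrite Re_inner_sub_r, !Re_inner_scal_r, Im_inner_sub_r. simpl. lra. }
    rewrite E.
    pose proof (Im_bound (dd t) (vsub (Hf Hs n Hop f t (phi1 t)) (Hf Hs n Hop g t (phi1 t)))) as HIm.
    assert (Hdn : vnorm (dd t) <= 2 * vnorm Psi).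
    { unfold dd. eapply Rle_trans. apply vnorm_sub_le. unfold phi1, phi2.
      rewrite (U_norm Hs n Hop D I f U1 HU1), (U_norm Hs n Hop D I g U2 HU2); auto. lra. }
    assert (Hwn : vnorm (vsub (Hf Hs n Hop f t (phi1 t)) (Hf Hs n Hop g t (phi1 t))) <= c' * KS * (Mb' + vnorm Psi)).
    { unfold Hf at 1 2. eapply Rle_trans. apply Hsum_sub_norm.
      unfold KS.
      replace (c' * rsum n K * (Mb' + vnorm Psi)) with (rsum n (fun i => c' * (K i * (Mb' + vnorm Psi)))).
      2:{ rewrite rsum_scal. replace (rsum n (fun i => K i * (Mb' + vnorm Psi))) with (rsum n (fun i => (Mb' + vnorm Psi) * K i)).
          rewrite rsum_scal. ring. apply rsum_ext; intros; ring. }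
      apply rsum_le. intros i Hin.
      assert (Hfg : Rabs (f i t - g i t) <= c') by (eapply Rle_trans; [apply Hc; auto|apply Rmax_l]).
      destruct (HK i Hin) as [HKi HKb]. specialize (HKb (phi1 t) t D1 It).
      assert (HMt : vnorm (Hf Hs n Hop f t (phi1 t)) <= Mb').
      { eapply Rle_trans; [|apply Rmax_l]. apply (HMb t Ht). }
      unfold phi1 in HKb at 3. rewrite (U_norm Hs n Hop D I f U1 HU1) in HKb; auto.
      apply Rmult_le_compat. apply Rabs_pos. apply vnorm_ge0. auto.
      eapply Rle_trans. apply HKb. apply Rmult_le_compat_l. lra. lra. }
    assert (Hc'0 : 0 <= c') by apply Rmax_r.
    apply Rabs_le_inv in HIm. destruct HIm as [_ HIm].
    pose proof (vnorm_ge0 (dd t)). pose proof (vnorm_ge0 (vsub (Hf Hs n Hop f t (phi1 t)) (Hf Hs n Hop g t (phi1 t)))).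
    assert (vnorm (dd t) * vnorm (vsub (Hf Hs n Hop f t (phi1 t)) (Hf Hs n Hop g t (phi1 t))) <=
            (2 * vnorm Psi) * (c' * KS * (Mb' + vnorm Psi))) by (apply Rmult_le_compat; auto).
    unfold A. nra. }
  pose proof (rlim_to_mvt (fun r => nsq (dd r)) (fun t => 2 * Re (inner (dd t) (vsub (d1 t) (d2 t)))) s T (c' * A)
               ltac:(lra) Hderiv Hbound) as Hmvt.
  assert (Hds : nsq (dd s) = 0).
  { unfold dd, phi1, phi2. rewrite (U_id Hs n Hop D I f U1 HU1), (U_id Hs n Hop D I g U2 HU2); auto.
    rewrite vsub_diag. apply nsq_vzero. }
  cbv beta in Hmvt. rewrite Hds, Rminus_0_r in Hmvt.
  assert (Hfin : nsq (dd T) < eps * eps).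
  { assert (Hc'd : c' <= eps * eps / (A * (T - s) + 1)).
    { unfold c'. apply Rmax_lub. lra. left. apply Rdiv_lt_0_compat; nra. }
    assert (c' * A * (T - s) <= eps * eps / (A * (T - s) + 1) * (A * (T - s))).
    { rewrite Rmult_assoc. apply Rmult_le_compat_r. nra. auto. }
    assert (eps * eps / (A * (T - s) + 1) * (A * (T - s)) < eps * eps).
    { apply Rmult_lt_reg_r with (A * (T - s) + 1). nra.
      replace (eps * eps / (A * (T - s) + 1) * (A * (T - s)) * (A * (T - s) + 1)) with (eps * eps * (A * (T - s))) by (field; nra).
      nra. }
    lra. }
  unfold vnorm. fold (nsq (vsub (U1 T s Psi) (U2 T s Psi))). fold (phi1 T) (phi2 T). fold (dd T).
  rewrite <- (sqrt_square eps) by lra. apply sqrt_lt_1_alt. split. apply nsq_ge0. auto.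
Qed.
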